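(* Let $k\ge2$, $L\ge3$, and let $T:\Pi_L\to\Sigma_k$ be the map constructed below (with $\Pi=\Pi_L$). Let $y\in Trans(\Pi_L)$ and $i\in\{1,\dots,6\}$. If $y$ satisfies Case $(i)$ in $\Pi_L$, then $T(y)$ satisfies Case $(i')$ in $\Sigma_k$.
   Context: $\Sigma_k=\{0,\dots,k-1\}^{\mathbb{N}}$ with metric $d(x,y)=\sum_{n\ge1}\delta(x_n,y_n)/2^n$ ($\delta(a,b)=0$ if $a=b$, $1$ otherwise) and shift $\sigma$. $\Pi_L=\{x\in\Sigma_k:$ no $L$ consecutive symbols of $x$ are all equal$\}$; $Trans(\Pi_L)=\{y\in\Pi_L:\omega_\sigma(y)=\Pi_L\}$. A finite word is contained in $\Pi$ if it is a prefix of some point of $\Pi$. Construction of $T$: enumerate all finite words contained in $\Pi$ as $C_1,C_2,\dots$; fix a finite word $A_1$ not contained in $\Pi$; for $y\in\Pi$ let $Y_n$ be its first $n$ symbols; $B_n=C_nY_n\cdots Y_n$ ($Y_n$ repeated $|A_n|^2$ times), $A_{n+1}=A_nB_nA_n$; $T(y)$ is the point having every $A_n$ as prefix; the construction requires $|C_n|=o(|A_n|)$. $N(x,U)=\{n\ge1:\sigma^nx\in U\}$; $\overline d,\underline d$ upper/lower asymptotic densities, $B^*,B_*$ Banach upper/lower densities; $\omega_\xi(x)=\{z:\xi(N(x,B_\varepsilon(z)))>0\ \forall\varepsilon>0\}$; $\omega_\sigma$ the $\omega$-limit set. Writing $\omega_\xi$ for $\omega_\xi(x)$: Case (1) $\omega_{B_*}\subsetneq\omega_{\underline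 d}=\omega_{\overline d}=\omega_{B^*}=\omega_\sigma$; (2) $\omega_{B_*}\subsetneq\omega_{\underline d}=\omega_{\overline d}\subsetneq\omega_{B^*}=\omega_\sigma$; (3) $\omega_{B_*}=\omega_{\underline d}\subsetneq\omega_{\overline d}=\omega_{B^*}=\omega_\sigma$; (4) $\omega_{B_*}\subsetneq\omega_{\underline d}\subsetneq\omega_{\overline d}=\omega_{B^*}=\omega_\sigma$; (5) $\omega_{B_*}=\omega_{\underline d}\subsetneq\omega_{\overline d}\subsetneq\omega_{B^*}=\omega_\sigma$; (6) $\omega_{B_*}\subsetneq\omega_{\underline d}\subsetneq\omega_{\overline d}\subsetneq\omega_{B^*}=\omega_\sigma$. Case $(i')$ is Case $(i)$ with the final equality $\omega_{B^*}=\omega_\sigma$ replaced by the strict inclusion $\omega_{B^*}\subsetneq\omega_\sigma$. *)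

(* Defs.v *)
From Stdlib Require Import Reals List Arith ClassicalDescription.
From Coquelicot Require Import Coquelicot.
Open Scope R_scope.

(* Points of the full shift: x : nat -> nat, with x n standing for the
   paper's x_{n+1} (0-based storage of sequences indexed by N = {1,2,...}). *)
Definition point := nat -> nat.

Definition in_Sigma (k : nat) (x : point) : Prop := forall n, (x n < k)%nat.

Definition delta (a b : nat) : R := if Nat.eqb a b then 0 else 1.

Definition dist (x y : point) : R :=
  Series (fun n => delta (x n) (y n) / 2 ^ (S n)).

Definition shiftn (n : nat) (x : point) : point := fun m => x (n + m)%nat.

Definition ball (z : point) (eps : R) : point -> Prop := fun w => dist w z < eps.

Definition Pi (k L : nat) (x : point) : Prop :=
  in_Sigma k x /\ forall n, ~ (forall j, (j < L)%nat -> x (n + j)%nat = x n).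

Definition is_prefix (w : list nat) (x : point) : Prop :=
  forall i, (i < length w)%nat -> x i = nth i w 0%nat.

Definition contained (X : point -> Prop) (w : list nat) : Prop :=
  exists x, X x /\ is_prefix w x.

Definition Nset (x : point) (U : point -> Prop) : nat -> Prop :=
  fun n => (1 <= n)%nat /\ U (shiftn n x).

Definition ind (A : nat -> Prop) (n : nat) : R :=
  if excluded_middle_informative (A n) then 1 else 0.

Fixpoint cnt (A : nat -> Prop) (a n : nat) : R :=
  match n with
  | O => 0
  | S m => cnt A a m + ind A (a + S m)
  end.

Definition dens_up (A : nat -> Prop) : Rbar :=
  LimSup_seq (fun n => cnt A 0 n / INR n).
Definition dens_low (A : nat -> Prop) : Rbar :=
  LimInf_seq (fun n => cnt A 0 n / INR n).
Definition banach_up (A : nat -> Prop) : Rbar :=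
  Lim_seq (fun n => real (Sup_seq (fun m => Finite (cnt A m n / INR n)))).
Definition banach_low (A : nat -> Prop) : Rbar :=
  Lim_seq (fun n => real (Inf_seq (fun m => Finite (cnt A m n / INR n)))).

Definition omega_xi (X : point -> Prop) (xi : (nat -> Prop) -> Rbar) (x : point)
  : point -> Prop :=
  fun z => X z /\ forall eps, 0 < eps -> Rbar_lt (Finite 0) (xi (Nset x (ball z eps))).

Definition omega_sigma (X : point -> Prop) (x : point) : point -> Prop :=
  fun z => X z /\ forall eps, 0 < eps -> forall M : nat,
      exists n : nat, (M <= n)%nat /\ dist (shiftn n x) z < eps.

Definition Trans (k L : nat) (y : point) : Prop :=
  Pi k L y /\ forall z, omega_sigma (Pi k L) y z <-> Pi k L z.

Definition seteq (P Q : point -> Prop) : Prop := forall z, P z <-> Q z.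
Definition ssub (P Q : point -> Prop) : Prop :=
  (forall z, P z -> Q z) /\ ~ seteq P Q.

(* Case (i) (primed = false) or Case (i') (primed = true) for x in ambient X. *)
Definition Case (X : point -> Prop) (x : point) (i : nat) (primed : bool) : Prop :=
  let oBl := omega_xi X banach_low x in
  let odl := omega_xi X dens_low x in
  let odu := omega_xi X dens_up x in
  let oBu := omega_xi X banach_up x in
  let os := omega_sigma X x in
  let last := if primed then ssub oBu os else seteq oBu os in
  match i with
  | 1%nat => ssub oBl odl /\ seteq odl odu /\ seteq odu oBu /\ last
  | 2%nat => ssub oBl odl /\ seteq odl odu /\ ssub odu oBu /\ last
  | 3%nat => seteq oBl odl /\ ssub odl odu /\ seteq odu oBu /\ last
  | 4%nat => ssub oBl odl /\ ssub odl odu /\ seteq odu oBu /\ last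
  | 5%nat => seteq oBl odl /\ ssub odl odu /\ ssub odu oBu /\ last
  | 6%nat => ssub oBl odl /\ ssub odl odu /\ ssub odu oBu /\ last
  | _ => False
  end.

Definition Yw (y : point) (n : nat) : list nat := map y (seq 0 n).
Definition rep (w : list nat) (m : nat) : list nat := concat (repeat w m).

(* Aseq A1 C y m = A_{m+1};  A_{n+1} = A_n B_n A_n, B_n = C_n Y_n^{|A_n|^2} *)
Fixpoint Aseq (A1 : list nat) (C : nat -> list nat) (y : point) (m : nat) : list nat :=
  match m with
  | O => A1
  | S m' =>
      let a := Aseq A1 C y m' in
      a ++ (C m ++ rep (Yw y m) (length a ^ 2)) ++ a
  end.

(* Main.v *)
Require Import Defs.
From Stdlib Require Import Reals List Arith.
From Coquelicot Require Import Coquelicot.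
Open Scope R_scope.
From Stdlib Require Import Lia Lra ClassicalDescription Classical.
Import ListNotations.

Module P0.
Open Scope R_scope.

Lemma ind_01 A j : 0 <= Defs.ind A j <= 1.
Proof. unfold Defs.ind; destruct (excluded_middle_informative (A j)); lra. Qed.

Lemma ind_1 A j : A j -> Defs.ind A j = 1.
Proof. intro H; unfold Defs.ind; destruct (excluded_middle_informative (A j)); tauto. Qed.

Lemma ind_0 A j : ~ A j -> Defs.ind A j = 0.
Proof. intro H; unfold Defs.ind; destruct (excluded_middle_informative (A j)); tauto. Qed.

Lemma ind_mono (A B : nat -> Prop) j k : (A j -> B k) -> Defs.ind A j <= Defs.ind B k.
Proof.
  intro H; unfold Defs.ind; destruct (excluded_middle_informative (A j));
  destruct (excluded_middle_informative (B k)); try lra; tauto.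
Qed.

Lemma cnt_add A a n m : cnt A a (n + m) = cnt A a n + cnt A (a + n) m.
Proof.
  induction m; simpl.
  - rewrite Nat.add_0_r; lra.
  - rewrite Nat.add_succ_r; simpl. rewrite IHm.
    replace (a + S (n + m))%nat with (a + n + S m)%nat by lia. lra.
Qed.

Lemma cnt_bounds A a n : 0 <= cnt A a n <= INR n.
Proof.
  induction n. simpl. lra. simpl cnt. pose proof (ind_01 A (a + S n)). rewrite S_INR. lra.
Qed.

Lemma cnt_mono (A B : nat -> Prop) a b n :
  (forall i, (1 <= i <= n)%nat -> A (a + i)%nat -> B (b + i)%nat) ->
  cnt A a n <= cnt B b n.
Proof.
  induction n; intro H; simpl. lra.
  pose proof (ind_mono A B (a + S n) (b + S n) (H (S n) ltac:(lia))).
  assert (cnt A a n <= cnt B b n) by (apply IHn; intros; apply H; auto; lia). lra.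
Qed.

Lemma cnt_ext (A B : nat -> Prop) a b n :
  (forall i, (1 <= i <= n)%nat -> (A (a + i)%nat <-> B (b + i)%nat)) ->
  cnt A a n = cnt B b n.
Proof.
  intro H. apply Rle_antisym; apply cnt_mono; intros i Hi; apply H in Hi; tauto.
Qed.

Lemma cnt_S_left A a n : cnt A a (S n) = Defs.ind A (a + 1)%nat + cnt A (a + 1) n.
Proof.
  replace (S n) with (1 + n)%nat by lia. rewrite cnt_add. simpl.
  replace (a+1)%nat with (a + 1)%nat by lia. lra.
Qed.

Lemma cnt_zero (A : nat -> Prop) a n :
  (forall i, (1 <= i <= n)%nat -> ~ A (a + i)%nat) -> cnt A a n = 0.
Proof.
  intro H. apply Rle_antisym.
  - replace 0 with (cnt (fun _ => False) a n).
    + apply cnt_mono. intros i Hi HA. apply (H i Hi HA).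
    + clear H. induction n; simpl; auto. rewrite IHn, ind_0; auto. lra.
  - apply cnt_bounds.
Qed.

Lemma cnt_union (A B D : nat -> Prop) a n :
  (forall j, A j -> B j \/ D j) -> cnt A a n <= cnt B a n + cnt D a n.
Proof.
  intro H. induction n; simpl. lra.
  assert (Defs.ind A (a + S n) <= Defs.ind B (a + S n) + Defs.ind D (a + S n)).
  { unfold Defs.ind. destruct (excluded_middle_informative (A (a + S n)%nat));
    destruct (excluded_middle_informative (B (a + S n)%nat));
    destruct (excluded_middle_informative (D (a + S n)%nat)); try lra.
    destruct (H _ a0); tauto. }
  lra.
Qed.

Lemma cnt_le_split A a n m : cnt A a (n + m) <= cnt A a n + INR m.
Proof. rewrite cnt_add. pose proof (cnt_bounds A (a+n) m). lra. Qed.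

Lemma cnt_mono_len A a n m : (n <= m)%nat -> cnt A a n <= cnt A a m.
Proof.
  intro H. replace m with (n + (m - n))%nat by lia. rewrite cnt_add.
  pose proof (cnt_bounds A (a+n) (m-n)). lra.
Qed.

End P0.
Import P0.

Module P1.
Open Scope R_scope.

Lemma sep_count (Q : nat -> Prop) (D : nat) :
  (1 <= D)%nat ->
  (forall a b, (a < b)%nat -> Q a -> Q b -> (a + D <= b)%nat) ->
  forall l s, cnt Q s l * INR D <= INR l + INR D.
Proof.
  intros HD Hsep l. induction l as [l IH] using lt_wf_ind. intro s.
  destruct l as [|l'].
  - simpl. pose proof (pos_INR D). lra.
  - rewrite cnt_S_left.
    assert (HDp : 0 < INR D) by (apply lt_0_INR; lia).
    destruct (classic (Q (s + 1)%nat)) as [Hs|Hs].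
    + rewrite ind_1 by auto.
      assert (Hz : forall i, (1 <= i <= D - 1)%nat -> ~ Q (s + 1 + i)%nat).
      { intros i Hi HS. specialize (Hsep (s+1)%nat (s+1+i)%nat ltac:(lia) Hs HS). lia. }
      destruct (le_lt_dec l' (D - 1)) as [Hl|Hl].
      * rewrite cnt_zero. 2:{ intros i Hi. apply Hz. lia. }
        rewrite S_INR. pose proof (pos_INR l'). nra.
      * replace l' with ((D - 1) + (l' - (D - 1)))%nat by lia.
        rewrite cnt_add. rewrite cnt_zero by (intros; apply Hz; lia).
        specialize (IH (l' - (D - 1))%nat ltac:(lia) (s + 1 + (D - 1))%nat).
        rewrite S_INR, plus_INR, minus_INR by lia. rewrite minus_INR in IH by lia.
        rewrite minus_INR by lia. simpl INR. nra.
    + rewrite ind_0 by auto. specialize (IH l' ltac:(lia) (s+1)%nat).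
      rewrite S_INR. nra.
Qed.

Fixpoint sumR (K : nat) (f : nat -> R) : R :=
  match K with O => 0 | S K' => sumR K' f + f (S K') end.

Lemma sumR_plus K f g : sumR K (fun i => f i + g i) = sumR K f + sumR K g.
Proof. induction K; simpl; lra. Qed.

Lemma sumR_le K f g : (forall i, (1 <= i <= K)%nat -> f i <= g i) -> sumR K f <= sumR K g.
Proof.
  induction K; intro H; simpl. lra.
  assert (sumR K f <= sumR K g) by (apply IHK; intros; apply H; lia).
  specialize (H (S K) ltac:(lia)). lra.
Qed.

Lemma sumR_const K c : sumR K (fun _ => c) = INR K * c.
Proof. induction K; simpl sumR. simpl; lra. rewrite IHK, S_INR. lra. Qed.

Lemma sumR_term K f i : (forall j, 0 <= f j) -> (1 <= i <= K)%nat -> f i <= sumR K f.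
Proof.
  intros H0. induction K; intro Hi. lia.
  simpl. destruct (Nat.eq_dec i (S K)).
  - subst. assert (0 <= sumR K f).
    { clear IHK Hi. induction K; simpl. lra. specialize (H0 (S K)). lra. }
    lra.
  - specialize (IHK ltac:(lia)). specialize (H0 (S K)). lra.
Qed.

Lemma cover_count (P Q : nat -> Prop) (K : nat) :
  (forall j, P j -> exists i, (1 <= i <= K)%nat /\ Q (j + i)%nat) ->
  forall s l, cnt P s l <= sumR K (fun i => cnt Q (s + i) l).
Proof.
  intros H s l. induction l.
  - simpl. rewrite (sumR_const K 0) at 1. lra.
  - simpl cnt.
    rewrite (sumR_plus K (fun i => cnt Q (s + i) l) (fun i => Defs.ind Q (s + i + S l)%nat)).
    assert (Defs.ind P (s + S l) <= sumR K (fun i => Defs.ind Q (s + i + S l)%nat)).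
    { destruct (classic (P (s + S l)%nat)) as [HP|HP].
      - rewrite ind_1 by auto. destruct (H _ HP) as [i [Hi HS]].
        eapply Rle_trans.
        2:{ apply (sumR_term K (fun i => Defs.ind Q (s + i + S l)%nat) i); auto.
            intro; apply ind_01. }
        rewrite ind_1. lra. replace (s + i + S l)%nat with (s + S l + i)%nat by lia. auto.
      - rewrite ind_0 by auto. rewrite <- (Rmult_0_r (INR K)), <- sumR_const.
        apply sumR_le. intros; apply ind_01. }
    lra.
Qed.

Lemma cover_sep_count (P Q : nat -> Prop) (K D : nat) :
  (1 <= D)%nat ->
  (forall a b, (a < b)%nat -> Q a -> Q b -> (a + D <= b)%nat) ->
  (forall j, P j -> exists i, (1 <= i <= K)%nat /\ Q (j + i)%nat) ->
  forall s l, cnt P s l <= INR K * ((INR l + INR D) / INR D).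
Proof.
  intros HD Hsep Hc s l. eapply Rle_trans. apply (cover_count P Q K Hc).
  rewrite <- sumR_const. apply sumR_le. intros i Hi.
  assert (0 < INR D) by (apply lt_0_INR; lia).
  pose proof (sep_count Q D HD Hsep l (s + i)).
  apply (Rmult_le_reg_r (INR D)); auto. unfold Rdiv. rewrite Rmult_assoc, Rinv_l by lra. lra.
Qed.

End P1.
Import P1.

Module P2.
Open Scope R_scope.

Lemma inv_INR_nonneg n : 0 <= / INR n.
Proof. destruct n. simpl. rewrite Rinv_0. lra. left. apply Rinv_0_lt_compat, lt_0_INR. lia. Qed.

Lemma cnt_div_01 A m n : 0 <= cnt A m n / INR n <= 1.
Proof.
  pose proof (cnt_bounds A m n). destruct n.
  - simpl. unfold Rdiv. rewrite Rinv_0. lra.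
  - assert (0 < INR (S n)) by (apply lt_0_INR; lia). split.
    + apply Rmult_le_pos. lra. apply inv_INR_nonneg.
    + apply (Rmult_le_reg_r (INR (S n))); auto. unfold Rdiv.
      rewrite Rmult_assoc, Rinv_l by lra. lra.
Qed.

Lemma Rbar_notpos (L : Rbar) : (forall e, 0 < e -> Rbar_le L (Finite e)) -> ~ Rbar_lt (Finite 0) L.
Proof.
  intros H Hl. destruct L as [l| |]; simpl in *.
  - specialize (H (l/2) ltac:(lra)). simpl in H. lra.
  - specialize (H 1 ltac:(lra)). simpl in H. auto.
  - auto.
Qed.

Lemma LimSup_notpos (u : nat -> R) :
  (forall d, 0 < d -> exists N, forall n, (N <= n)%nat -> u n <= d) -> ~ Rbar_lt (Finite 0) (LimSup_seq u).
Proof.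
  intro H. apply Rbar_notpos. intros e He.
  replace (Finite e) with (LimSup_seq (fun _ => e)).
  2:{ apply is_LimSup_seq_unique, is_LimSup_seq_const. }
  apply LimSup_le. destruct (H e He) as [N HN]. exists N. auto.
Qed.

Lemma LimSup_pos_inf (u : nat -> R) :
  Rbar_lt (Finite 0) (LimSup_seq u) -> exists d, 0 < d /\ forall M, exists n, (M <= n)%nat /\ d < u n.
Proof.
  unfold LimSup_seq. destruct (ex_LimSup_seq u) as [l Hl]. simpl.
  destruct l as [l| |]; simpl in *; intro Hp.
  - exists (l/2). split. lra. intro M. destruct (Hl (mkposreal (l/2) ltac:(lra))) as [H1 _].
    destruct (H1 M) as [n [Hn Hu]]. exists n. simpl in Hu. split; auto. lra.
  - exists 1. split. lra. intro M. destruct (Hl 1 M) as [n Hn]. exists n. tauto.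
  - tauto.
Qed.

Lemma LimSup_pos_of (u : nat -> R) d :
  0 < d -> (forall M, exists n, (M <= n)%nat /\ d <= u n) -> Rbar_lt (Finite 0) (LimSup_seq u).
Proof.
  intros Hd H. unfold LimSup_seq. destruct (ex_LimSup_seq u) as [l Hl]. simpl.
  destruct l as [l| |]; simpl in *; auto.
  - destruct (Rlt_or_le 0 l); auto. exfalso.
    destruct (Hl (mkposreal (d/2) ltac:(lra))) as [_ [N HN]].
    destruct (H N) as [n [Hn Hu]]. specialize (HN n Hn). simpl in HN. lra.
  - destruct (Hl d) as [N HN]. destruct (H N) as [n [Hn Hu]]. specialize (HN n Hn). lra.
Qed.

Lemma LimInf_pos_ev (u : nat -> R) :
  Rbar_lt (Finite 0) (LimInf_seq u) -> exists d, 0 < d /\ exists N, forall n, (N <= n)%nat -> d < u n.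
Proof.
  unfold LimInf_seq. destruct (ex_LimInf_seq u) as [l Hl]. simpl.
  destruct l as [l| |]; simpl in *; intro Hp.
  - exists (l/2). split. lra. destruct (Hl (mkposreal (l/2) ltac:(lra))) as [_ [N HN]].
    exists N. intros n Hn. specialize (HN n Hn). simpl in HN. lra.
  - exists 1. split. lra. apply Hl.
  - tauto.
Qed.

Lemma LimInf_pos_of (u : nat -> R) d :
  0 < d -> (exists N, forall n, (N <= n)%nat -> d <= u n) -> Rbar_lt (Finite 0) (LimInf_seq u).
Proof.
  intros Hd H. eapply Rbar_lt_le_trans with (Finite d). simpl; auto.
  replace (Finite d) with (LimInf_seq (fun _ => d)).
  2:{ apply is_LimInf_seq_unique. intro eps. split.
      - intro N. exists N. split; auto. destruct eps; simpl; lra.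
      - exists O. intros. destruct eps; simpl; lra. }
  apply LimInf_le. destruct H as [N HN]. exists N. auto.
Qed.

Lemma LimInf_notpos (u : nat -> R) :
  (forall d, 0 < d -> forall M, exists n, (M <= n)%nat /\ u n <= d) -> ~ Rbar_lt (Finite 0) (LimInf_seq u).
Proof.
  intros H. unfold LimInf_seq. destruct (ex_LimInf_seq u) as [l Hl]. simpl.
  destruct l as [l| |]; simpl in *; intro Hp; auto.
  - destruct (Hl (mkposreal (l/2) ltac:(lra))) as [_ [N HN]].
    destruct (H (l/2) ltac:(lra) N) as [n [Hn Hu]]. specialize (HN n Hn). simpl in HN. lra.
  - destruct (Hl 1) as [N HN]. destruct (H 1 ltac:(lra) N) as [n [Hn Hu]].
    specialize (HN n Hn). lra.
Qed.

Lemma sup01 (u : nat -> R) : (forall m, 0 <= u m <= 1) ->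
  exists s, Sup_seq (fun m => Finite (u m)) = Finite s /\ (forall m, u m <= s) /\
            (forall e, 0 < e -> exists m, s - e < u m).
Proof.
  intro H. pose proof (Sup_seq_correct (fun m => Finite (u m))) as Hs.
  destruct (Sup_seq (fun m => Finite (u m))) as [s| |] eqn:E; simpl in Hs.
  - exists s. split; auto. split.
    + intro m. destruct (Rle_or_lt (u m) s); auto. exfalso.
      destruct (Hs (mkposreal (u m - s) ltac:(lra))) as [H1 _]. specialize (H1 m). simpl in H1. lra.
    + intros e He. destruct (Hs (mkposreal e He)) as [_ [m Hm]]. exists m. simpl in Hm. auto.
  - exfalso. destruct (Hs 2) as [m Hm]. simpl in Hm. specialize (H m). lra.
  - exfalso. specialize (Hs 0 O). simpl in Hs. specialize (H O). lra.
Qed.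

Lemma inf01 (u : nat -> R) : (forall m, 0 <= u m <= 1) ->
  exists s, Inf_seq (fun m => Finite (u m)) = Finite s /\ (forall m, s <= u m) /\
            (forall e, 0 < e -> exists m, u m < s + e).
Proof.
  intro H. pose proof (Inf_seq_correct (fun m => Finite (u m))) as Hs.
  destruct (Inf_seq (fun m => Finite (u m))) as [s| |] eqn:E; simpl in Hs.
  - exists s. split; auto. split.
    + intro m. destruct (Rle_or_lt s (u m)); auto. exfalso.
      destruct (Hs (mkposreal (s - u m) ltac:(lra))) as [H1 _]. specialize (H1 m). simpl in H1. lra.
    + intros e He. destruct (Hs (mkposreal e He)) as [_ [m Hm]]. exists m. simpl in Hm. auto.
  - exfalso. specialize (Hs 2 O). simpl in Hs. specialize (H O). lra.
  - exfalso. destruct (Hs (-1)) as [m Hm]. simpl in Hm. specialize (H m). lra.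
Qed.

Lemma banach_up_mono (A B : nat -> Prop) :
  (forall l m, exists m', cnt A m l <= cnt B m' l) -> Rbar_le (banach_up A) (banach_up B).
Proof.
  intro H. unfold banach_up. apply Lim_seq_le_loc. exists O. intros l _.
  destruct (sup01 (fun m => cnt A m l / INR l) (fun m => cnt_div_01 A m l)) as [sA [EA [HA1 HA2]]].
  destruct (sup01 (fun m => cnt B m l / INR l) (fun m => cnt_div_01 B m l)) as [sB [EB [HB1 HB2]]].
  rewrite EA, EB. simpl. destruct (Rle_or_lt sA sB); auto. exfalso.
  destruct (HA2 (sA - sB) ltac:(lra)) as [m Hm]. destruct (H l m) as [m' Hm'].
  specialize (HB1 m'). assert (cnt A m l / INR l <= cnt B m' l / INR l).
  { apply Rmult_le_compat_r. apply inv_INR_nonneg. auto. }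
  lra.
Qed.

Lemma banach_up_zero (A : nat -> Prop) :
  (forall e, 0 < e -> exists l0, forall l, (l0 <= l)%nat -> forall m, cnt A m l / INR l <= e) ->
  ~ Rbar_lt (Finite 0) (banach_up A).
Proof.
  intro H. apply Rbar_notpos. intros e He. unfold banach_up.
  rewrite <- (Lim_seq_const e). apply Lim_seq_le_loc. destruct (H e He) as [l0 Hl0].
  exists l0. intros l Hl.
  destruct (sup01 (fun m => cnt A m l / INR l) (fun m => cnt_div_01 A m l)) as [sA [EA [HA1 HA2]]].
  rewrite EA. simpl. destruct (Rle_or_lt sA e); auto. exfalso.
  destruct (HA2 (sA - e) ltac:(lra)) as [m Hm]. specialize (Hl0 l Hl m). lra.
Qed.

Lemma banach_low_zero (A : nat -> Prop) :
  (forall l, (1 <= l)%nat -> exists m, cnt A m l = 0) -> ~ Rbar_lt (Finite 0) (banach_low A).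
Proof.
  intro H. unfold banach_low.
  rewrite (Lim_seq_ext _ (fun _ => 0)). rewrite Lim_seq_const. simpl. lra.
  intro l.
  destruct (inf01 (fun m => cnt A m l / INR l) (fun m => cnt_div_01 A m l)) as [sA [EA [HA1 HA2]]].
  rewrite EA. simpl.
  assert (0 <= sA).
  { destruct (Rle_or_lt 0 sA); auto. destruct (HA2 (- sA) ltac:(lra)) as [m Hm].
    pose proof (cnt_div_01 A m l). lra. }
  destruct l.
  - specialize (HA1 O). simpl in HA1. unfold Rdiv in HA1. rewrite Rmult_0_l in HA1. lra.
  - destruct (H (S l) ltac:(lia)) as [m Hm]. specialize (HA1 m). rewrite Hm in HA1.
    unfold Rdiv in HA1. rewrite Rmult_0_l in HA1. lra.
Qed.

Lemma dens_low_mono (A B : nat -> Prop) :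
  (forall j, (1 <= j)%nat -> A j -> B j) -> Rbar_le (dens_low A) (dens_low B).
Proof.
  intro H. unfold dens_low. apply LimInf_le. exists O. intros n _.
  apply Rmult_le_compat_r. apply inv_INR_nonneg. apply cnt_mono. intros; apply H; auto; lia.
Qed.

Lemma dens_up_mono (A B : nat -> Prop) :
  (forall j, (1 <= j)%nat -> A j -> B j) -> Rbar_le (dens_up A) (dens_up B).
Proof.
  intro H. unfold dens_up. apply LimSup_le. exists O. intros n _.
  apply Rmult_le_compat_r. apply inv_INR_nonneg. apply cnt_mono. intros; apply H; auto; lia.
Qed.

Lemma banach_up_mono1 (A B : nat -> Prop) :
  (forall j, (1 <= j)%nat -> A j -> B j) -> Rbar_le (banach_up A) (banach_up B).
Proof.
  intro H. apply banach_up_mono. intros l m. exists m. apply cnt_mono. intros; apply H; auto; lia.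
Qed.

Lemma nat_above (x : R) : exists n : nat, x < INR n.
Proof.
  destruct (Rle_or_lt x 0).
  - exists 1%nat. simpl. lra.
  - destruct (archimed_cor1 (/ x)) as [N [HN HN0]]. apply Rinv_0_lt_compat; auto.
    exists N. assert (0 < INR N) by (apply lt_0_INR; auto).
    rewrite <- (Rinv_inv x). rewrite <- (Rinv_inv (INR N)).
    apply Rinv_lt_contravar. apply Rmult_lt_0_compat; apply Rinv_0_lt_compat; auto. auto.
Qed.

Lemma nat_above_ge (x : R) (m : nat) : exists n : nat, (m <= n)%nat /\ x < INR n.
Proof.
  destruct (nat_above x) as [n Hn]. exists (max m n). split. lia.
  eapply Rlt_le_trans. apply Hn. apply le_INR. lia.
Qed.

End P2.
Import P2.

Module P3.
Open Scope R_scope.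

Definition agree (u v : point) (r : nat) : Prop := forall i, (i < r)%nat -> u i = v i.

Lemma delta_01 a b : 0 <= delta a b <= 1.
Proof. unfold delta. destruct (Nat.eqb a b); lra. Qed.

Lemma delta_eq a : delta a a = 0.
Proof. unfold delta. rewrite Nat.eqb_refl. auto. Qed.

Lemma delta_neq a b : a <> b -> delta a b = 1.
Proof. intro H. unfold delta. apply Nat.eqb_neq in H. rewrite H. auto. Qed.

Lemma pow2_pos n : 0 < 2 ^ n.
Proof. apply pow_lt. lra. Qed.

Lemma inv_pow2_S n : / 2 ^ S n = / 2 ^ n * / 2.
Proof. simpl. rewrite Rinv_mult. lra. Qed.

Lemma half_pow n : / 2 * (/ 2) ^ n = / 2 ^ S n.
Proof. rewrite pow_inv. simpl. rewrite Rinv_mult. reflexivity. Qed.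

Lemma term_bound (u v : point) n :
  0 <= delta (u n) (v n) / 2 ^ S n <= / 2 * (/ 2) ^ n.
Proof.
  pose proof (delta_01 (u n) (v n)). pose proof (pow2_pos (S n)).
  rewrite half_pow. unfold Rdiv. assert (0 < / 2 ^ S n) by (apply Rinv_0_lt_compat; auto).
  split. apply Rmult_le_pos; lra. nra.
Qed.

Lemma ex_series_scal_geom c : ex_series (fun k => c * (/ 2) ^ k).
Proof.
  apply (@ex_series_scal_l R_AbsRing R_CompleteNormedModule c (fun k => (/ 2)^k)).
  apply ex_series_geom. rewrite Rabs_pos_eq; lra.
Qed.

Lemma ex_series_geom2 : ex_series (fun n => / 2 * (/ 2) ^ n).
Proof. apply ex_series_scal_geom. Qed.

Lemma Series_geom2 : Series (fun n => (/ 2) ^ n) = 2.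
Proof.
  assert (H : Rabs (/ 2) < 1) by (rewrite Rabs_pos_eq; lra).
  pose proof (is_series_geom (/ 2) H) as H0.
  replace (/ (1 - / 2)) with 2 in H0 by field. apply is_series_unique. exact H0.
Qed.

Lemma ex_series_dist (u v : point) : ex_series (fun n => delta (u n) (v n) / 2 ^ S n).
Proof.
  apply (@ex_series_le R_AbsRing R_CompleteNormedModule _ (fun n => / 2 * (/ 2) ^ n)). 2: apply ex_series_geom2.
  intro n. pose proof (term_bound u v n). change (Rabs (delta (u n) (v n) / 2 ^ S n) <= / 2 * (/ 2) ^ n).
  rewrite Rabs_pos_eq; lra.
Qed.

Lemma dist_nonneg u v : 0 <= Defs.dist u v.
Proof.
  unfold Defs.dist. replace 0 with (Series (fun n => 0 * 1)).
  - apply Series_le. intro n. pose proof (term_bound u v n). lra. apply ex_series_dist.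
  - rewrite (Series_scal_l 0 (fun _ => 1)). lra.
Qed.

Lemma agree_dist u v r : agree u v r -> Defs.dist u v <= / 2 ^ r.
Proof.
  intro H. unfold Defs.dist.
  rewrite (Series_incr_n_aux _ r).
  2:{ intros k Hk. rewrite H by auto. rewrite delta_eq. unfold Rdiv. ring. }
  eapply Rle_trans.
  apply (Series_le _ (fun k => / 2 ^ S r * (/ 2) ^ k)).
  - intro k. split. apply (term_bound u v (r + k)).
    pose proof (term_bound u v (r+k)) as [_ Hb]. eapply Rle_trans. apply Hb.
    right. rewrite half_pow. rewrite pow_inv, <- Rinv_mult. f_equal. rewrite <- pow_add. f_equal.
  - apply ex_series_scal_geom.
  - rewrite Series_scal_l. rewrite (Series_geom2 : Series (pow (/ 2)) = 2). rewrite inv_pow2_S. lra.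
Qed.

Lemma dist_agree u v r : Defs.dist u v < / 2 ^ r -> agree u v r.
Proof.
  intros H i Hi. destruct (Nat.eq_dec (u i) (v i)) as [E|E]; auto. exfalso.
  unfold Defs.dist in H.
  rewrite (Series_incr_n _ (S i)) in H by (auto with arith || apply ex_series_dist).
  simpl pred in H.
  assert (Ht : 0 <= Series (fun k => delta (u (S i + k)%nat) (v (S i + k)%nat) / 2 ^ S (S i + k))).
  { replace 0 with (Series (fun n => 0 * 1)).
    - apply Series_le. intro n. pose proof (term_bound u v (S i + n)). lra.
      apply (ex_series_incr_n (fun n => delta (u n) (v n) / 2 ^ S n) (S i)). apply ex_series_dist.
    - rewrite (Series_scal_l 0 (fun _ => 1)). lra. }
  assert (Hs : delta (u i) (v i) / 2 ^ S i <= sum_f_R0 (fun n => delta (u n) (v n) / 2 ^ S n) i).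
  { destruct i. simpl. lra. rewrite tech5.
    assert (0 <= sum_f_R0 (fun n => delta (u n) (v n) / 2 ^ S n) i).
    { apply cond_pos_sum. intro n. apply (term_bound u v n). }
    lra. }
  rewrite delta_neq in Hs by auto.
  assert (/ 2 ^ r <= 1 / 2 ^ S i).
  { unfold Rdiv. rewrite Rmult_1_l. apply Rinv_le_contravar. apply pow2_pos.
    apply Rle_pow. lra. lia. }
  lra.
Qed.

End P3.
Import P3.

Module P4.
Open Scope R_scope.

Lemma len_rep (w : list nat) n : length (rep w n) = (n * length w)%nat.
Proof. unfold rep. induction n; simpl; auto. rewrite length_app, IHn. lia. Qed.

Lemma len_Yw y m : length (Yw y m) = m.
Proof. unfold Yw. rewrite length_map, length_seq. auto. Qed.

Lemma nth_rep (w : list nat) n i t : (i < n)%nat -> (t < length w)%nat ->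
  nth (i * length w + t) (rep w n) 0%nat = nth t w 0%nat.
Proof.
  unfold rep. revert i. induction n; intros i Hi Ht. lia.
  simpl. destruct i.
  - simpl. rewrite app_nth1 by lia. auto.
  - rewrite app_nth2 by (simpl; lia).
    replace (S i * length w + t - length w)%nat with (i * length w + t)%nat by (simpl; lia).
    apply IHn; lia.
Qed.

Lemma nth_Yw y m t : (t < m)%nat -> nth t (Yw y m) 0%nat = y t.
Proof.
  intro H. unfold Yw. rewrite nth_indep with (d' := y 0%nat) by (rewrite length_map, length_seq; auto).
  rewrite map_nth, seq_nth by auto. auto.
Qed.

Section Struct.
Variables (C : nat -> list nat) (A1 : list nat) (y Ty : point).
Hypothesis Hpre : forall m, is_prefix (Aseq A1 C y m) Ty.

Definition al m := length (Aseq A1 C y m).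
Definition cl m := length (C (S m)).
Definition gl m := (cl m + S m * al m ^ 2)%nat.

Lemma al_S m : al (S m) = (2 * al m + gl m)%nat.
Proof.
  unfold al, gl, cl. simpl Aseq. rewrite !length_app, len_rep, len_Yw. fold (al m). simpl. ring.
Qed.

Lemma al_0 : al 0 = length A1.
Proof. reflexivity. Qed.

Lemma al_ge (HA1 : (1 <= length A1)%nat) m : (S m <= al m)%nat.
Proof. induction m. rewrite al_0; lia. rewrite al_S. lia. Qed.

Lemma al_mono m m' : (m <= m')%nat -> (al m <= al m')%nat.
Proof. induction 1. lia. rewrite al_S. lia. Qed.

Lemma al_sq_le m : (al m <= al m ^ 2)%nat.
Proof. simpl. destruct (al m); nia. Qed.

Lemma gl_ge m : (S m * al m ^ 2 <= gl m)%nat.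
Proof. unfold gl. lia. Qed.

Lemma Ty_A m j : (j < al m)%nat -> Ty j = nth j (Aseq A1 C y m) 0%nat.
Proof. intro H. apply Hpre. auto. Qed.

Lemma Aseq_S m : Aseq A1 C y (S m) =
  Aseq A1 C y m ++ (C (S m) ++ rep (Yw y (S m)) (al m ^ 2)) ++ Aseq A1 C y m.
Proof. reflexivity. Qed.

Lemma Ty_C m t : (t < cl m)%nat -> Ty (al m + t)%nat = nth t (C (S m)) 0%nat.
Proof.
  intro H. rewrite (Ty_A (S m)) by (rewrite al_S; unfold gl; lia).
  rewrite Aseq_S. rewrite app_nth2 by (fold (al m); lia). fold (al m).
  replace (al m + t - al m)%nat with t by lia.
  rewrite app_nth1 by (rewrite length_app; unfold cl in H; lia).
  rewrite app_nth1 by (unfold cl in H; lia). auto.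
Qed.

Lemma Ty_Y m i t : (i < al m ^ 2)%nat -> (t < S m)%nat ->
  Ty (al m + cl m + i * S m + t)%nat = y t.
Proof.
  intros Hi Ht.
  assert (Hb : (i * S m + t < al m ^ 2 * S m)%nat) by nia.
  rewrite (Ty_A (S m)) by (rewrite al_S; unfold gl; nia).
  rewrite Aseq_S. rewrite app_nth2 by (fold (al m); lia). fold (al m).
  rewrite app_nth1 by (rewrite length_app, len_rep, len_Yw; unfold cl; lia).
  rewrite app_nth2 by (unfold cl; lia). fold (cl m).
  replace (al m + cl m + i * S m + t - al m - cl m)%nat with (i * S m + t)%nat by lia.
  rewrite <- (len_Yw y (S m)) at 1. rewrite nth_rep by (rewrite ?len_Yw; auto).
  apply nth_Yw; auto.
Qed.

Lemma Ty_A2 m t : (t < al m)%nat -> Ty (al m + gl m + t)%nat = Ty t.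
Proof.
  intro Ht. rewrite (Ty_A (S m)) by (rewrite al_S; lia). rewrite (Ty_A m) by auto.
  rewrite Aseq_S. rewrite app_nth2 by (fold (al m); lia). fold (al m).
  rewrite app_nth2 by (rewrite length_app, len_rep, len_Yw; unfold gl, cl; lia).
  rewrite length_app, len_rep, len_Yw. f_equal. unfold gl, cl. lia.
Qed.

End Struct.

End P4.
Import P4.

Module P5.
Open Scope R_scope.

Definition cyl (x z : point) (r : nat) : nat -> Prop := fun j => agree (shiftn j x) z r.

Lemma Pi_shift k L p j : Pi k L p -> Pi k L (shiftn j p).
Proof.
  intros [H1 H2]. split.
  - intro n. apply H1.
  - intros n Hn. apply (H2 (j + n)%nat). intros i Hi. unfold shiftn in Hn.
    specialize (Hn i Hi). rewrite <- Nat.add_assoc. auto.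
Qed.

Section L1.
Variables (k L : nat) (C : nat -> list nat) (A1 : list nat) (y Ty : point).
Hypothesis HA1 : (1 <= length A1)%nat.
Hypothesis Hpre : forall m, is_prefix (Aseq A1 C y m) Ty.
Hypothesis Hy : Pi k L y.
Hypothesis HC : forall n, (1 <= n)%nat -> contained (Pi k L) (C n).
Variables (z : point) (r : nat).
Hypothesis Hz : ~ exists p, Pi k L p /\ agree p z r.

Notation al := (al C A1 y).
Notation cl := (cl C).
Notation gl := (gl C A1 y).

Section Level.
Variable n : nat.
Hypothesis Hrn : (r <= al n)%nat.

Fixpoint CE (d : nat) (e : nat) : Prop :=
  match d with
  | O => e = al n
  | S d' => CE d' e \/ exists e', CE d' e' /\ e = (e' + al (n + d') + gl (n + d'))%nat
  end.

Fixpoint BP (d : nat) (b : nat) : Prop :=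
  match d with
  | O => False
  | S d' => BP d' b \/
      (exists i, (i <= al (n + d') ^ 2)%nat /\ b = (al (n + d') + cl (n + d') + i * S (n + d'))%nat) \/
      (exists b', BP d' b' /\ b = (b' + al (n + d') + gl (n + d'))%nat)
  end.

Lemma al_Sn d : al (n + S d) = (2 * al (n + d) + gl (n + d))%nat.
Proof. rewrite Nat.add_succ_r. apply al_S. Qed.

Lemma al_n_le d : (al n <= al (n + d))%nat.
Proof. apply (al_mono C A1 y). lia. Qed.

Lemma CE_bounds d e : CE d e -> (al n <= e <= al (n + d))%nat.
Proof.
  revert e. induction d; simpl; intros e H.
  - rewrite Nat.add_0_r. lia.
  - rewrite al_Sn. destruct H as [H|[e' [H E]]].
    + apply IHd in H. lia.
    + apply IHd in H. lia.
Qed.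

Lemma CE_last d : CE d (al (n + d)).
Proof.
  induction d; simpl. rewrite Nat.add_0_r. auto.
  right. exists (al (n + d)). split; auto. rewrite al_Sn. lia.
Qed.

Lemma BP_bounds d b : BP d b -> (al n <= b /\ b + al n <= al (n + d))%nat.
Proof.
  revert b. induction d; simpl; intros b H. contradiction.
  rewrite al_Sn. pose proof (al_n_le d). pose proof (gl_ge C A1 y (n + d)).
  destruct H as [H|[[i [Hi E]]|[b' [H E]]]].
  - apply IHd in H. lia.
  - subst b. unfold gl in *. split. lia.
    assert (i * S (n + d) <= al (n + d) ^ 2 * S (n + d))%nat by (apply Nat.mul_le_mono_r; auto).
    lia.
  - apply IHd in H. lia.
Qed.

Lemma CE_sep d a b : (a < b)%nat -> CE d a -> CE d b -> (a + (al n + al n ^ 2) <= b)%nat.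
Proof.
  revert a b. induction d; intros a b Hab Ha Hb; simpl in Ha, Hb.
  - lia.
  - pose proof (gl_ge C A1 y (n + d)).
    assert (al n ^ 2 <= S (n + d) * al (n + d) ^ 2)%nat.
    { pose proof (al_n_le d). simpl. nia. }
    assert (Hg : (al n ^ 2 <= gl (n + d))%nat) by (eapply Nat.le_trans; eauto).
    remember (al n ^ 2)%nat as X. clear HeqX.
    destruct Ha as [Ha|[a' [Ha Ea]]]; destruct Hb as [Hb|[b' [Hb Eb]]].
    + auto.
    + apply CE_bounds in Ha. apply CE_bounds in Hb. lia.
    + apply CE_bounds in Ha. apply CE_bounds in Hb. lia.
    + specialize (IHd a' b' ltac:(lia) Ha Hb). lia.
Qed.

Lemma BP_sep d a b : (a < b)%nat -> BP d a -> BP d b -> (a + S n <= b)%nat.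
Proof.
  revert a b. induction d; intros a b Hab Ha Hb; simpl in Ha, Hb.
  - contradiction.
  - pose proof (gl_ge C A1 y (n + d)). pose proof (al_ge C A1 y HA1 n).
    pose proof (al_n_le d).
    assert (Hgap : forall i, (i <= al (n + d) ^ 2)%nat ->
              (al (n + d) + cl (n + d) + i * S (n + d) <= al (n + d) + gl (n + d))%nat).
    { intros i Hi. unfold gl.
      assert (i * S (n + d) <= al (n + d) ^ 2 * S (n + d))%nat by (apply Nat.mul_le_mono_r; auto).
      lia. }
    destruct Ha as [Ha|[[i1 [Hi1 Ea]]|[a' [Ha Ea]]]];
    destruct Hb as [Hb|[[i2 [Hi2 Eb]]|[b' [Hb Eb]]]].
    + auto.
    + apply BP_bounds in Ha. lia.
    + apply BP_bounds in Ha. apply BP_bounds in Hb. lia.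
    + apply BP_bounds in Hb. lia.
    + subst a b. assert (i1 < i2)%nat by nia. nia.
    + apply BP_bounds in Hb. specialize (Hgap i1 Hi1). lia.
    + apply BP_bounds in Ha. apply BP_bounds in Hb. lia.
    + apply BP_bounds in Ha. specialize (Hgap i2 Hi2). lia.
    + specialize (IHd a' b' ltac:(lia) Ha Hb). lia.
Qed.

Definition bad (M j : nat) : Prop := (al M < j + r)%nat \/ cyl Ty z r j.

Definition covered (d j : nat) : Prop :=
  (exists i, (1 <= i <= al n)%nat /\ CE d (j + i)%nat) \/
  (exists i, (1 <= i <= r)%nat /\ BP d (j + i)%nat).

Lemma covered_S d j : covered d j -> covered (S d) j.
Proof.
  intros [[i [Hi H]]|[i [Hi H]]]; [left|right]; exists i; split; auto; simpl; auto.
Qed.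

Lemma covered_shift d j : covered d j ->
  covered (S d) (j + al (n + d) + gl (n + d))%nat.
Proof.
  intros [[i [Hi H]]|[i [Hi H]]]; [left|right]; exists i; split; auto; simpl.
  - right. exists (j + i)%nat. split; auto. lia.
  - right. right. exists (j + i)%nat. split; auto. lia.
Qed.

Lemma no_occ_C m t : (t + r <= cl m)%nat -> ~ cyl Ty z r (al m + t)%nat.
Proof.
  intros Ht Hc. destruct (HC (S m) ltac:(lia)) as [p [Hp Hpp]].
  apply Hz. exists (shiftn t p). split. apply Pi_shift; auto.
  intros i Hi. specialize (Hc i Hi). unfold shiftn in *.
  rewrite <- Hc. rewrite <- Nat.add_assoc.
  rewrite (Ty_C C A1 y Ty Hpre m (t + i)) by (unfold cl in *; lia).
  unfold is_prefix in Hpp. apply Hpp. unfold cl in Ht. lia.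
Qed.

Lemma no_occ_Y m i t : (i < al m ^ 2)%nat -> (t + r <= S m)%nat ->
  ~ cyl Ty z r (al m + cl m + i * S m + t)%nat.
Proof.
  intros Hi Ht Hc. apply Hz. exists (shiftn t y). split. apply Pi_shift; auto.
  intros i' Hi'. specialize (Hc i' Hi'). unfold shiftn in *.
  rewrite <- Hc. rewrite <- Nat.add_assoc. rewrite (Ty_Y C A1 y Ty Hpre) by (auto; lia). auto.
Qed.

Lemma covering d j : (j < al (n + d))%nat -> bad (n + d) j -> covered d j.
Proof.
  revert j. induction d; intros j Hj Hb.
  - left. exists (al n - j)%nat. rewrite Nat.add_0_r in Hj. split. lia. simpl. lia.
  - set (m := (n + d)%nat) in *.
    assert (Hm : (n + S d)%nat = S m) by (unfold m; lia).
    rewrite Hm in Hj, Hb. rewrite al_S in Hj.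
    pose proof (al_n_le d) as Hnm. fold m in Hnm.
    destruct (lt_dec j (al m)) as [H1|H1].
    + destruct (le_lt_dec (j + r) (al m)) as [H2|H2].
      * apply covered_S. apply IHd. auto. destruct Hb as [Hb|Hb]; [|right; auto].
        rewrite al_S in Hb. lia.
      * left. exists (al m - j)%nat. split. lia. simpl. left.
        replace (j + (al m - j))%nat with (al (n + d)) by (unfold m in *; lia). apply CE_last.
    + destruct (lt_dec j (al m + gl m)) as [H3|H3].
      *
        right. destruct Hb as [Hb|Hb]. { rewrite al_S in Hb. lia. }
        destruct (classic (exists i, (1 <= i <= r)%nat /\ BP (S d) (j + i)%nat)) as [Hex|Hnex]; auto.
        exfalso.
        assert (Hnot : forall i, (i <= al m ^ 2)%nat -> ~ (j < al m + cl m + i * S m <= j + r)%nat).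
        { intros i Hi Hr. apply Hnex. exists (al m + cl m + i * S m - j)%nat. split. lia.
          simpl. right. left. exists i. split. fold m. auto. fold m. lia. }
        destruct (lt_dec j (al m + cl m)) as [H4|H4].
        -- assert (al m + cl m > j + r)%nat.
           { destruct (le_lt_dec (al m + cl m) (j + r)); auto.
             exfalso. apply (Hnot 0%nat). lia. lia. }
           apply (no_occ_C m (j - al m)). lia. replace (al m + (j - al m))%nat with j by lia. auto.
        -- set (o := (j - al m - cl m)%nat).
           assert (Ho : (o < S m * al m ^ 2)%nat) by (unfold o, gl in *; lia).
           set (i := (o / S m)%nat). set (t := (o mod S m)%nat).
           assert (Eo : o = (i * S m + t)%nat).
           { unfold i, t. rewrite (Nat.div_mod_eq o (S m)) at 1. lia. }
           assert (Ht : (t < S m)%nat) by (apply Nat.mod_upper_bound; lia).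
           assert (Hi : (i < al m ^ 2)%nat).
           { destruct (lt_dec i (al m ^ 2)); auto. exfalso.
             assert (al m ^ 2 * S m <= i * S m)%nat by (apply Nat.mul_le_mono_r; lia). nia. }
           assert (t + r < S m)%nat.
           { destruct (le_lt_dec (S m) (t + r)); auto. exfalso.
             apply (Hnot (S i)). lia. unfold o in Eo. simpl. nia. }
           apply (no_occ_Y m i t Hi ltac:(lia)).
           replace (al m + cl m + i * S m + t)%nat with j by (unfold o in Eo; lia). auto.
      *
        set (j' := (j - al m - gl m)%nat).
        assert (Ej : j = (j' + al m + gl m)%nat) by (unfold j'; lia).
        rewrite Ej. apply covered_shift. apply IHd. unfold m in *; lia.
        destruct Hb as [Hb|Hb].
        -- left. rewrite al_S in Hb. unfold m in *. lia.
        -- destruct (le_lt_dec (j' + r) (al m)) as [H5|H5]; [|left; unfold m in *; lia].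
           right. intros i Hi. specialize (Hb i Hi). unfold shiftn in *.
           rewrite <- Hb. rewrite Ej.
           replace (j' + al m + gl m + i)%nat with (al m + gl m + (j' + i))%nat by lia.
           rewrite (Ty_A2 C A1 y Ty Hpre) by lia. auto.
Qed.

Lemma window_bound s l : cnt (cyl Ty z r) s l <=
  INR (al n) * ((INR l + INR (al n + al n ^ 2)) / INR (al n + al n ^ 2)) +
  INR r * ((INR l + INR (S n)) / INR (S n)).
Proof.
  assert (Hub : exists d, (s + l < al (n + d))%nat).
  { exists (s + l)%nat. pose proof (al_ge C A1 y HA1 (n + (s + l))). lia. }
  destruct Hub as [d Hd].
  assert (Hr : cnt (cyl Ty z r) s l <= cnt (fun j => (j <= s + l)%nat /\ cyl Ty z r j) s l).
  { apply cnt_mono. intros i Hi H. split; auto. lia. }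
  eapply Rle_trans. apply Hr.
  eapply Rle_trans.
  apply (cnt_union _ (fun j => exists i, (1 <= i <= al n)%nat /\ CE d (j + i)%nat)
           (fun j => exists i, (1 <= i <= r)%nat /\ BP d (j + i)%nat) s l).
  { intros j [Hj Hc]. apply (covering d j). lia. right; auto. }
  apply Rplus_le_compat.
  - apply (cover_sep_count _ (CE d)).
    + pose proof (al_ge C A1 y HA1 n). lia.
    + intros a b Hab Ha Hb. apply (CE_sep d a b Hab Ha Hb).
    + auto.
  - apply (cover_sep_count _ (BP d)).
    + lia.
    + intros a b Hab Ha Hb. apply (BP_sep d a b Hab Ha Hb).
    + auto.
Qed.

End Level.

Lemma L1_banach : ~ Rbar_lt (Finite 0) (banach_up (cyl Ty z r)).
Proof.
  apply banach_up_zero. intros e He.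
  destruct (nat_above_ge (2 * (1 + INR r) / e) r) as [n [Hnr Hn]].
  set (A := INR (al n)). set (Sn := INR (S n)). set (R := INR r).
  assert (HA : Sn <= A) by (apply le_INR; apply al_ge; auto).
  assert (HSn : INR n + 1 = Sn) by (unfold Sn; rewrite S_INR; lra).
  assert (HR : 0 <= R) by apply pos_INR.
  assert (Hn' : (1 + R) <= e / 2 * Sn).
  { apply (Rmult_lt_compat_r e) in Hn; auto. unfold Rdiv in Hn.
    rewrite Rmult_assoc, Rinv_l in Hn by lra. fold R in Hn. rewrite <- HSn. nra. }
  destruct (nat_above_ge (2 * (A + R) / e) 1) as [l0 [Hl01 Hl0]].
  exists l0. intros l Hl m.
  assert (Hl' : 0 < INR l) by (apply lt_0_INR; lia).
  assert (Hl0' : INR l0 <= INR l) by (apply le_INR; auto).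
  assert (Hrn : (r <= al n)%nat) by (pose proof (al_ge C A1 y HA1 n); lia).
  pose proof (window_bound n Hrn m l) as Hw.
  assert (ED : INR (al n + al n ^ 2) = A + A * A) by (unfold A; rewrite plus_INR, pow_INR; simpl; ring).
  rewrite ED in Hw. fold A Sn R in Hw.
  assert (HSp : 0 < Sn) by (unfold Sn; apply lt_0_INR; lia).
  assert (HAp : 0 < A) by lra.
  assert (B1 : A * ((INR l + (A + A * A)) / (A + A * A)) <= INR l / Sn + A).
  { replace (A * ((INR l + (A + A * A)) / (A + A * A))) with (INR l / (1 + A) + A) by (field; repeat split; intro; nra).
    apply Rplus_le_compat_r. unfold Rdiv. apply Rmult_le_compat_l. lra.
    apply Rinv_le_contravar; lra. }
  assert (B2 : R * ((INR l + Sn) / Sn) = R * INR l / Sn + R) by (field; intro; lra).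
  assert (B3 : INR l / Sn + R * INR l / Sn <= e / 2 * INR l).
  { replace (INR l / Sn + R * INR l / Sn) with ((1 + R) * INR l / Sn) by (field; intro; lra).
    apply (Rmult_le_reg_r Sn); auto. unfold Rdiv. rewrite Rmult_assoc, Rinv_l by lra. nra. }
  assert (B4 : A + R <= e / 2 * INR l).
  { apply (Rmult_lt_compat_r e) in Hl0; auto. unfold Rdiv in Hl0.
    rewrite Rmult_assoc, Rinv_l in Hl0 by lra. nra. }
  apply (Rmult_le_reg_r (INR l)); auto. unfold Rdiv. rewrite Rmult_assoc, Rinv_l by lra. lra.
Qed.

End L1.

End P5.
Import P5.

Module P6.
Open Scope R_scope.

Lemma cyl_copy (x x' z : point) r p q K n :
  (forall t, (t < K)%nat -> x (p + t)%nat = x' (q + t)%nat) -> (n + r <= K)%nat ->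
  cnt (cyl x z r) p n = cnt (cyl x' z r) q n.
Proof.
  intros H Hn. apply cnt_ext. intros i Hi. unfold cyl, agree, shiftn. split; intros Ha j Hj.
  - rewrite <- Ha by auto. rewrite <- !Nat.add_assoc. symmetry. apply H. lia.
  - rewrite <- Ha by auto. rewrite <- !Nat.add_assoc. apply H. lia.
Qed.

Section Dens.
Variables (C : nat -> list nat) (A1 : list nat) (y Ty : point).
Hypothesis HA1 : (1 <= length A1)%nat.
Hypothesis Hpre : forall m, is_prefix (Aseq A1 C y m) Ty.
Variables (z : point) (r : nat).

Notation al := (al C A1 y).
Notation cl := (cl C).
Notation gl := (gl C A1 y).

Definition f N := cnt (cyl y z r) 0 N.
Definition F N := cnt (cyl Ty z r) 0 N.

Lemma F_add N d : F (N + d) = F N + cnt (cyl Ty z r) N d.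
Proof. unfold F. rewrite cnt_add. auto. Qed.

Lemma F_mono N N' : (N <= N')%nat -> F N <= F N'.
Proof. intro H. apply cnt_mono_len. auto. Qed.

Lemma f_mono N N' : (N <= N')%nat -> f N <= f N'.
Proof. intro H. apply cnt_mono_len. auto. Qed.

Lemma F_le N : F N <= INR N.
Proof. apply cnt_bounds. Qed.

Lemma F_nonneg N : 0 <= F N.
Proof. apply cnt_bounds. Qed.

Definition Pm m i := (al m + cl m + i * S m)%nat.
Definition Qm m := (al m + gl m)%nat.

Lemma Qm_eq m : Qm m = Pm m (al m ^ 2).
Proof. unfold Qm, Pm, gl. lia. Qed.

Lemma win_Y m i : (i < al m ^ 2)%nat -> (r <= S m)%nat ->
  f (S m) - INR r <= cnt (cyl Ty z r) (Pm m i) (S m) <= f (S m) + INR r.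
Proof.
  intros Hi Hr.
  assert (E : cnt (cyl Ty z r) (Pm m i) (S m - r) = f (S m - r)).
  { unfold f. apply (cyl_copy _ _ _ _ _ _ (S m)). intros t Ht. unfold Pm.
    rewrite (Ty_Y C A1 y Ty Hpre) by auto. auto. lia. }
  assert (H1 : cnt (cyl Ty z r) (Pm m i) (S m) = cnt (cyl Ty z r) (Pm m i) (S m - r)
                 + cnt (cyl Ty z r) (Pm m i + (S m - r)) r)
    by (rewrite <- cnt_add; f_equal; lia).
  assert (H2 : f (S m) = f (S m - r) + cnt (cyl y z r) (0 + (S m - r)) r)
    by (unfold f; rewrite <- cnt_add; f_equal; lia).
  rewrite H1, H2, E.
  pose proof (cnt_bounds (cyl Ty z r) (Pm m i + (S m - r)) r).
  pose proof (cnt_bounds (cyl y z r) (0 + (S m - r)) r). lra.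
Qed.

Lemma tile m i : (i <= al m ^ 2)%nat -> (r <= S m)%nat ->
  INR i * (f (S m) - INR r) <= F (Pm m i) - F (Pm m 0) <= INR i * (f (S m) + INR r).
Proof.
  intros Hi Hr. induction i.
  - simpl. lra.
  - specialize (IHi ltac:(lia)).
    replace (Pm m (S i)) with (Pm m i + S m)%nat by (unfold Pm; simpl; lia).
    rewrite F_add. pose proof (win_Y m i ltac:(lia) Hr). rewrite S_INR. lra.
Qed.

Lemma FP0 m : F (al m) <= F (Pm m 0) <= F (al m) + INR (cl m).
Proof.
  unfold Pm. rewrite Nat.mul_0_l, Nat.add_0_r. rewrite F_add.
  pose proof (cnt_bounds (cyl Ty z r) (al m) (cl m)). lra.
Qed.

Lemma FQ_end m : (r <= al m)%nat -> F (al (S m)) <= F (Qm m) + INR (al m) + INR r.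
Proof.
  intro Hr. rewrite al_S. replace (2 * al m + gl m)%nat with (Qm m + al m)%nat by (unfold Qm; lia).
  rewrite F_add.
  assert (H1 : cnt (cyl Ty z r) (Qm m) (al m) = cnt (cyl Ty z r) (Qm m) (al m - r)
                 + cnt (cyl Ty z r) (Qm m + (al m - r)) r)
    by (rewrite <- cnt_add; f_equal; lia).
  rewrite H1.
  assert (E : cnt (cyl Ty z r) (Qm m) (al m - r) = F (al m - r)).
  { unfold F. apply (cyl_copy _ _ _ _ _ _ (al m)). intros t Ht. unfold Qm.
    rewrite (Ty_A2 C A1 y Ty Hpre) by auto. auto. lia. }
  rewrite E. pose proof (F_le (al m - r)).
  pose proof (cnt_bounds (cyl Ty z r) (Qm m + (al m - r)) r).
  assert (INR (al m - r) <= INR (al m)) by (apply le_INR; lia). lra.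
Qed.

End Dens.

End P6.
Import P6.

Module P7.
Open Scope R_scope.

Lemma LimSup_notpos_inv (u : nat -> R) :
  ~ Rbar_lt (Finite 0) (LimSup_seq u) -> forall d, 0 < d -> exists N, forall n, (N <= n)%nat -> u n <= d.
Proof.
  unfold LimSup_seq. destruct (ex_LimSup_seq u) as [l Hl]. simpl.
  intros Hn d Hd. destruct l as [l| |]; simpl in *.
  - destruct (Hl (mkposreal d Hd)) as [_ [N HN]]. exists N. intros n Hn'. specialize (HN n Hn').
    simpl in HN. lra.
  - tauto.
  - destruct (Hl d) as [N HN]. exists N. intros n Hn'. specialize (HN n Hn'). lra.
Qed.

Lemma LimInf_notpos_inv (u : nat -> R) :
  ~ Rbar_lt (Finite 0) (LimInf_seq u) -> forall d, 0 < d -> forall M, exists n, (M <= n)%nat /\ u n <= d.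
Proof.
  unfold LimInf_seq. destruct (ex_LimInf_seq u) as [l Hl]. simpl.
  intros Hn d Hd M. destruct l as [l| |]; simpl in *.
  - destruct (Hl (mkposreal d Hd)) as [HN _]. destruct (HN M) as [n [Hn' Hu]]. exists n.
    simpl in Hu. split; auto. lra.
  - tauto.
  - destruct (Hl d M) as [n [Hn' Hu]]. exists n. split; auto. lra.
Qed.

Lemma div_le_iff a b N : (1 <= N)%nat -> (a / INR N <= b <-> a <= b * INR N).
Proof.
  intro H. assert (0 < INR N) by (apply lt_0_INR; lia). split; intro H'.
  - apply (Rmult_le_compat_r (INR N)) in H'; [|lra]. unfold Rdiv in H'.
    rewrite Rmult_assoc, Rinv_l in H' by lra. lra.
  - apply (Rmult_le_reg_r (INR N)); auto. unfold Rdiv. rewrite Rmult_assoc, Rinv_l by lra. lra.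
Qed.

Lemma le_div_iff a b N : (1 <= N)%nat -> (b <= a / INR N <-> b * INR N <= a).
Proof.
  intro H. assert (0 < INR N) by (apply lt_0_INR; lia). split; intro H'.
  - apply (Rmult_le_compat_r (INR N)) in H'; [|lra]. unfold Rdiv in H'.
    rewrite Rmult_assoc, Rinv_l in H' by lra. lra.
  - apply (Rmult_le_reg_r (INR N)); auto. unfold Rdiv. rewrite Rmult_assoc, Rinv_l by lra. lra.
Qed.

Section Trans.
Variables (C : nat -> list nat) (A1 : list nat) (y Ty : point).
Hypothesis HA1 : (1 <= length A1)%nat.
Hypothesis Hpre : forall m, is_prefix (Aseq A1 C y m) Ty.
Hypothesis Ho : forall eps, 0 < eps -> exists N : nat, forall m, (N <= m)%nat ->
        INR (length (C (S m))) <= eps * INR (length (Aseq A1 C y m)).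
Variables (z : point) (r : nat).

Notation al := (al C A1 y).
Notation cl := (cl C).
Notation gl := (gl C A1 y).
Notation f := (f y z r).
Notation F := (F Ty z r).
Notation Pm := (Pm C A1 y).
Notation Qm := (Qm C A1 y).

Lemma Ho' eps : 0 < eps -> exists N, forall m, (N <= m)%nat -> INR (cl m) <= eps * INR (al m).
Proof. exact (Ho eps). Qed.

Lemma INR_Pm m i : INR (Pm m i) = INR (al m) + INR (cl m) + INR i * INR (S m).
Proof. unfold P6.Pm. rewrite !plus_INR, mult_INR. auto. Qed.

Lemma INR_gl m : INR (gl m) = INR (cl m) + INR (S m) * (INR (al m) * INR (al m)).
Proof. unfold P4.gl. rewrite plus_INR, mult_INR, pow_INR. simpl. ring. Qed.

Lemma INR_Qm m : INR (Qm m) = INR (al m) + INR (cl m) + INR (S m) * (INR (al m) * INR (al m)).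
Proof. unfold P6.Qm. rewrite plus_INR, INR_gl. ring. Qed.

Lemma INR_alS m : INR (al (S m)) = 2 * INR (al m) + INR (cl m) + INR (S m) * (INR (al m) * INR (al m)).
Proof. rewrite al_S, plus_INR, mult_INR, INR_gl. simpl. ring. Qed.

Lemma a_ge m : INR (S m) <= INR (al m).
Proof. apply le_INR, al_ge; auto. Qed.

Lemma locate m1 N' : (al m1 <= N')%nat -> exists m, (m1 <= m)%nat /\ (al m <= N' < al (S m))%nat.
Proof.
  intro H. assert (Hd : exists d, (N' < al (m1 + d))%nat).
  { exists N'. pose proof (al_ge C A1 y HA1 (m1 + N')). lia. }
  destruct Hd as [d Hd]. induction d.
  - rewrite Nat.add_0_r in Hd. lia.
  - destruct (lt_dec N' (al (m1 + d))) as [H'|H']; auto.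
    exists (m1 + d)%nat. split. lia. rewrite <- Nat.add_succ_r. lia.
Qed.

Lemma regions m N' : (al m <= N' < al (S m))%nat ->
  (N' < Pm m 0)%nat \/
  (exists i, (i < al m ^ 2)%nat /\ (Pm m i <= N' < Pm m (S i))%nat) \/
  (Qm m <= N')%nat.
Proof.
  intro H. destruct (lt_dec N' (Pm m 0)) as [H1|H1]; [left; auto|right].
  destruct (le_lt_dec (Qm m) N') as [H2|H2]; [right; auto|left].
  set (o := (N' - Pm m 0)%nat). exists (o / S m)%nat.
  assert (Eo : o = (S m * (o / S m) + o mod S m)%nat) by apply Nat.div_mod_eq.
  assert (Hm : (o mod S m < S m)%nat) by (apply Nat.mod_upper_bound; lia).
  rewrite (Qm_eq C A1 y HA1) in H2. unfold P6.Pm in *. unfold o in *.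
  split.
  - destruct (lt_dec ((N' - (al m + cl m + 0 * S m)) / S m) (al m ^ 2)); auto. exfalso.
    assert (al m ^ 2 * S m <= (N' - (al m + cl m + 0 * S m)) / S m * S m)%nat
      by (apply Nat.mul_le_mono_r; lia). nia.
  - nia.
Qed.


Lemma INR_sq m : INR (al m ^ 2) = INR (al m) * INR (al m).
Proof. rewrite pow_INR. simpl. ring. Qed.

Lemma a_ge1 m : 1 <= INR (al m).
Proof. pose proof (a_ge m). rewrite S_INR in H. pose proof (pos_INR m). lra. Qed.

Lemma upper_all d : 0 < d <= 1 ->
  (exists N0, forall N, (N0 <= N)%nat -> f N <= d * INR N) ->
  exists M0, forall N', (M0 <= N')%nat -> F N' <= 6 * d * INR N'.
Proof.
  intros Hd [N0 HN0].
  destruct (Ho' d ltac:(lra)) as [Nc Hc].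
  destruct (nat_above ((4 + INR r) / d)) as [n4 Hn4].
  set (m0 := (N0 + Nc + n4 + r)%nat).
  assert (Facts : forall m, (m0 <= m)%nat ->
    f (S m) <= d * INR (S m) /\ INR r <= d * INR (S m) /\ (r <= S m)%nat /\
    INR (cl m) <= d * INR (al m) /\ 4 <= d * INR (S m)).
  { intros m Hm. assert (Hsn : INR n4 <= INR (S m)) by (apply le_INR; unfold m0 in Hm; lia).
    assert (Hd4 : 4 + INR r <= d * INR (S m)).
    { apply (Rmult_lt_compat_l d) in Hn4; [|lra]. unfold Rdiv in Hn4.
      rewrite <- Rmult_assoc, (Rmult_comm d (4 + INR r)), Rmult_assoc, Rinv_r, Rmult_1_r in Hn4 by lra.
      nra. }
    repeat split.
    - apply HN0. unfold m0 in Hm; lia.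
    - lra.
    - unfold m0 in Hm; lia.
    - apply Hc. unfold m0 in Hm; lia.
    - pose proof (pos_INR r). lra. }
  assert (ClA : forall m, (m0 <= m)%nat -> F (al (S m)) <= 3 * d * INR (al (S m))).
  { intros m Hm. destruct (Facts m Hm) as [Hf [Hr [Hrn [Hcl H4]]]].
    pose proof (a_ge m) as Hsa. pose proof (a_ge1 m) as Ha1.
    assert (Hra : (r <= al m)%nat) by (pose proof (al_ge C A1 y HA1 m); lia).
    pose proof (FQ_end C A1 y Ty HA1 Hpre z r m Hra) as H1.
    pose proof (tile C A1 y Ty HA1 Hpre z r m (al m ^ 2) (le_n _) Hrn) as [_ H2].
    rewrite <- (Qm_eq C A1 y HA1) in H2. rewrite INR_sq in H2.
    pose proof (FP0 C A1 y Ty z r m) as [_ H3].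
    pose proof (F_le Ty z r (al m)) as H5.
    rewrite INR_alS.
    set (a := INR (al m)) in *. set (s := INR (S m)) in *. set (c := INR (cl m)) in *.
    assert (Hfr : f (S m) + INR r <= 2 * d * s) by lra.
    assert (Hx : a * a * (f (S m) + INR r) <= a * a * (2 * d * s)) by (apply Rmult_le_compat_l; nra).
    assert (Hy4 : d * s * (a * a) >= 4 * (a * a)) by nra.
    assert (INR r <= a) by (unfold a; apply le_INR; auto).
    assert (0 <= c) by (unfold c; apply pos_INR).
    nra. }
  exists (al (S m0)). intros N' HN'.
  destruct (locate (S m0) N' HN') as [m [Hm HmN]].
  destruct m as [|m1]. lia.
  assert (Hm0 : (m0 <= S m1)%nat) by lia.
  pose proof (ClA m1 ltac:(lia)) as HFa.
  set (m := S m1) in *.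
  destruct (Facts m Hm0) as [Hf [Hr [Hrn [Hcl H4]]]].
  pose proof (a_ge m) as Hsa. pose proof (a_ge1 m) as Ha1.
  pose proof (FP0 C A1 y Ty z r m) as [_ H3].
  assert (HN'a : INR (al m) <= INR N') by (apply le_INR; lia).
  destruct (regions m N' HmN) as [R1|[[i [Hi R2]]|R3]].
  - pose proof (F_mono Ty z r N' (Pm m 0) ltac:(lia)). nra.
  - pose proof (F_mono Ty z r N' (Pm m (S i)) ltac:(lia)).
    pose proof (tile C A1 y Ty HA1 Hpre z r m (S i) ltac:(lia) Hrn) as [_ H2].
    assert (HP : INR (Pm m i) <= INR N') by (apply le_INR; lia).
    rewrite INR_Pm in HP. rewrite S_INR in H2.
    set (a := INR (al m)) in *. set (s := INR (S m)) in *. set (c := INR (cl m)) in *.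
    assert (0 <= INR i) by apply pos_INR.
    assert (0 <= c) by (unfold c; apply pos_INR).
    assert (Hfr : f (S m) + INR r <= 2 * d * s) by lra.
    assert ((INR i + 1) * (f (S m) + INR r) <= (INR i + 1) * (2 * d * s)) by (apply Rmult_le_compat_l; lra).
    nra.
  - pose proof (F_mono Ty z r N' (al (S m)) ltac:(lia)).
    pose proof (ClA m Hm0).
    assert (HQ : INR (Qm m) <= INR N') by (apply le_INR; lia).
    rewrite INR_Qm in HQ. rewrite INR_alS in *.
    set (a := INR (al m)) in *. set (s := INR (S m)) in *. set (c := INR (cl m)) in *.
    assert (0 <= c) by (unfold c; apply pos_INR).
    assert (s * (a * a) >= a) by nra.
    nra.
Qed.


Lemma lower_all d : 0 < d <= 1 ->
  (exists N0, forall N, (N0 <= N)%nat -> d * INR N <= f N) ->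
  exists M0, forall N', (M0 <= N')%nat -> d / 24 * INR N' <= F N'.
Proof.
  intros Hd [N0 HN0].
  destruct (Ho' 1 ltac:(lra)) as [Nc Hc].
  destruct (nat_above (2 * INR r / d)) as [n4 Hn4].
  set (m0 := (N0 + Nc + n4 + r)%nat).
  assert (Facts : forall m, (m0 <= m)%nat ->
    d * INR (S m) <= f (S m) /\ INR r <= d * INR (S m) / 2 /\ (r <= S m)%nat /\
    INR (cl m) <= INR (al m)).
  { intros m Hm. assert (Hsn : INR n4 <= INR (S m)) by (apply le_INR; unfold m0 in Hm; lia).
    assert (Hd4 : 2 * INR r <= d * INR (S m)).
    { apply (Rmult_lt_compat_l d) in Hn4; [|lra]. unfold Rdiv in Hn4.
      rewrite <- Rmult_assoc, (Rmult_comm d (2 * INR r)), Rmult_assoc, Rinv_r, Rmult_1_r in Hn4 by lra.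
      nra. }
    repeat split.
    - apply HN0. unfold m0 in Hm; lia.
    - lra.
    - unfold m0 in Hm; lia.
    - rewrite <- (Rmult_1_l (INR (al m))). apply Hc. unfold m0 in Hm; lia. }
  assert (ClB : forall m, (m0 <= m)%nat -> d / 8 * INR (al (S m)) <= F (al (S m))).
  { intros m Hm. destruct (Facts m Hm) as [Hf [Hr [Hrn Hcl]]].
    pose proof (a_ge m) as Hsa. pose proof (a_ge1 m) as Ha1.
    assert (HQS : (Qm m <= al (S m))%nat) by (rewrite al_S; unfold P6.Qm; lia).
    pose proof (F_mono Ty z r (Qm m) (al (S m)) HQS) as H1.
    pose proof (tile C A1 y Ty HA1 Hpre z r m (al m ^ 2) (le_n _) Hrn) as [H2 _].
    rewrite <- (Qm_eq C A1 y HA1) in H2. rewrite INR_sq in H2.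
    pose proof (FP0 C A1 y Ty z r m) as [H3 _].
    pose proof (F_nonneg Ty z r (al m)) as H5.
    rewrite INR_alS in *.
    set (a := INR (al m)) in *. set (s := INR (S m)) in *. set (c := INR (cl m)) in *.
    assert (Hfr : d * s / 2 <= f (S m) - INR r) by lra.
    assert (Hx : a * a * (d * s / 2) <= a * a * (f (S m) - INR r)) by (apply Rmult_le_compat_l; nra).
    assert (0 <= c) by (unfold c; apply pos_INR).
    assert (s * (a * a) >= a) by (apply Rle_ge; assert (1 <= s) by (unfold s; apply (Rle_trans _ (INR 1)); [simpl; lra | apply le_INR; lia]); nra).
    assert (Hb : 2 * a + c + s * (a * a) <= 4 * (s * (a * a))) by nra.
    assert (d / 8 * (2 * a + c + s * (a * a)) <= d / 8 * (4 * (s * (a * a)))) by (apply Rmult_le_compat_l; lra).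
    nra. }
  exists (al (S m0)). intros N' HN'.
  destruct (locate (S m0) N' HN') as [m [Hm HmN]].
  destruct m as [|m1]. lia.
  assert (Hm0 : (m0 <= S m1)%nat) by lia.
  pose proof (ClB m1 ltac:(lia)) as HFa.
  set (m := S m1) in *.
  destruct (Facts m Hm0) as [Hf [Hr [Hrn Hcl]]].
  pose proof (a_ge m) as Hsa. pose proof (a_ge1 m) as Ha1.
  pose proof (FP0 C A1 y Ty z r m) as [H3 _].
  assert (HN'a : INR N' < INR (al (S m))) by (apply lt_INR; lia).
  assert (0 <= INR (cl m)) by apply pos_INR.
  destruct (regions m N' HmN) as [R1|[[i [Hi R2]]|R3]].
  - pose proof (F_mono Ty z r (al m) N' ltac:(lia)).
    assert (HP : INR N' <= INR (Pm m 0)) by (apply le_INR; lia).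
    rewrite INR_Pm in HP. replace (INR 0) with 0 in HP by reflexivity. rewrite Rmult_0_l in HP.
    assert (d / 24 * INR N' <= d / 24 * (2 * INR (al m))) by (apply Rmult_le_compat_l; lra).
    assert (0 <= d * INR (al m)) by (apply Rmult_le_pos; lra).
    nra.
  - pose proof (F_mono Ty z r (Pm m i) N' ltac:(lia)).
    pose proof (tile C A1 y Ty HA1 Hpre z r m i ltac:(lia) Hrn) as [H2 _].
    assert (HP : INR N' <= INR (Pm m (S i))) by (apply le_INR; lia).
    rewrite INR_Pm in HP. rewrite S_INR in HP.
    set (a := INR (al m)) in *. set (s := INR (S m)) in *. set (c := INR (cl m)) in *.
    assert (0 <= INR i) by apply pos_INR.
    assert (Hfr : d * s / 2 <= f (S m) - INR r) by lra.
    assert (INR i * (d * s / 2) <= INR i * (f (S m) - INR r)) by (apply Rmult_le_compat_l; lra).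
    assert (d / 24 * INR N' <= d / 24 * (3 * a + INR i * s)) by (apply Rmult_le_compat_l; nra).
    assert (0 <= s) by (unfold s; apply pos_INR). assert (0 <= INR i * s) by (apply Rmult_le_pos; lra).
    assert (d * (INR i * s) >= 0) by (apply Rle_ge, Rmult_le_pos; lra).
    lra.
  - pose proof (F_mono Ty z r (Qm m) N' ltac:(lia)).
    pose proof (tile C A1 y Ty HA1 Hpre z r m (al m ^ 2) (le_n _) Hrn) as [H2 _].
    rewrite <- (Qm_eq C A1 y HA1) in H2. rewrite INR_sq in H2.
    rewrite INR_alS in HN'a.
    pose proof (F_nonneg Ty z r (al m)).
    set (a := INR (al m)) in *. set (s := INR (S m)) in *. set (c := INR (cl m)) in *.
    assert (Hfr : d * s / 2 <= f (S m) - INR r) by lra.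
    assert (Hx : a * a * (d * s / 2) <= a * a * (f (S m) - INR r)) by (apply Rmult_le_compat_l; nra).
    assert (1 <= s) by (unfold s; apply (Rle_trans _ (INR 1)); [simpl; lra | apply le_INR; lia]).
    assert (s * (a * a) >= a) by nra.
    assert (Hb : 2 * a + c + s * (a * a) <= 4 * (s * (a * a))) by nra.
    assert (d / 24 * INR N' <= d / 24 * (4 * (s * (a * a)))) by (apply Rmult_le_compat_l; lra).
    assert (d * (s * (a * a)) >= 0) by (apply Rle_ge, Rmult_le_pos; nra).
    lra.
Qed.


Lemma nat_for (x : R) (M : nat) : exists n, (M <= n)%nat /\ x <= INR n.
Proof. destruct (nat_above_ge x M) as [n [H1 H2]]. exists n. split; auto. lra. Qed.

Lemma TL_up : Rbar_lt (Finite 0) (dens_up (cyl y z r)) <-> Rbar_lt (Finite 0) (dens_up (cyl Ty z r)).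
Proof.
  split.
  - intro H. unfold dens_up in H. apply LimSup_pos_inf in H. destruct H as [d [Hd H]].
    apply (LimSup_pos_of _ (d / 6)). lra.
    intro M. destruct (Ho' 1 ltac:(lra)) as [Nc Hc].
    destruct (nat_for (2 * INR r / d) 0) as [n2 [_ Hn2]].
    destruct (H (M + Nc + n2 + 2)%nat) as [N [HN HfN]].
    destruct N as [|m]. lia.
    assert (Hs2 : INR n2 <= INR (S m)) by (apply le_INR; lia).
    assert (Hrs : 2 * INR r <= d * INR (S m)).
    { apply (Rmult_le_compat_l d) in Hn2; [|lra]. unfold Rdiv in Hn2.
      rewrite <- Rmult_assoc, (Rmult_comm d (2 * INR r)), Rmult_assoc, Rinv_r, Rmult_1_r in Hn2 by lra.
      nra. }
    assert (Hfle : f (S m) / INR (S m) <= 1) by apply cnt_div_01.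
    assert (Hd1 : d < 1) by (change (f (S m) / INR (S m)) with (cnt (cyl y z r) 0 (S m) / INR (S m)) in Hfle; lra).
    assert (Hrn : (r <= S m)%nat) by (apply INR_le; pose proof (pos_INR r); nra).
    exists (Qm m). split. { unfold P6.Qm. pose proof (al_ge C A1 y HA1 m). lia. }
    assert (HQ1 : (1 <= Qm m)%nat) by (unfold P6.Qm; pose proof (al_ge C A1 y HA1 m); lia).
    apply le_div_iff; auto.
    pose proof (tile C A1 y Ty HA1 Hpre z r m (al m ^ 2) (le_n _) Hrn) as [H2 _].
    rewrite <- (Qm_eq C A1 y HA1) in H2. rewrite INR_sq in H2.
    pose proof (FP0 C A1 y Ty z r m) as [H3 _]. pose proof (F_nonneg Ty z r (al m)).
    assert (Hcl : INR (cl m) <= INR (al m)).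
    { rewrite <- (Rmult_1_l (INR (al m))). apply Hc. lia. }
    change (cnt (cyl y z r) 0 (S m) / INR (S m)) with (f (S m) / INR (S m)) in HfN.
    assert (Hf : d * INR (S m) <= f (S m)) by (apply le_div_iff; [lia|lra]).
    rewrite INR_Qm. pose proof (a_ge m) as Hsa. pose proof (a_ge1 m) as Ha1.
    set (a := INR (al m)) in *. set (s := INR (S m)) in *. set (c := INR (cl m)) in *.
    assert (1 <= s) by (unfold s; apply (Rle_trans _ (INR 1)); [simpl; lra | apply le_INR; lia]).
    assert (Hx : a * a * (d * s / 2) <= a * a * (f (S m) - INR r)) by (apply Rmult_le_compat_l; nra).
    assert (Hb : a + c + s * (a * a) <= 3 * (s * (a * a))) by nra.
    assert (d / 6 * (a + c + s * (a * a)) <= d / 6 * (3 * (s * (a * a)))) by (apply Rmult_le_compat_l; lra).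
    change (F (Qm m)) with (cnt (cyl Ty z r) 0 (Qm m)) in *.
    nra.
  - intros H. destruct (classic (Rbar_lt (Finite 0) (dens_up (cyl y z r)))) as [H'|H']; auto.
    exfalso. revert H. apply LimSup_notpos. intros d' Hd'.
    pose proof (LimSup_notpos_inv _ H') as Hy.
    set (d := Rmin (d' / 6) 1).
    assert (Hd : 0 < d <= 1) by (unfold d; unfold Rmin; destruct (Rle_dec (d'/6) 1); lra).
    assert (Hdd : 6 * d <= d') by (unfold d; unfold Rmin; destruct (Rle_dec (d'/6) 1); lra).
    destruct (upper_all d Hd) as [M0 HM0].
    { destruct (Hy d ltac:(lra)) as [N HN]. exists (N + 1)%nat. intros n Hn.
      apply div_le_iff. lia. apply HN. lia. }
    exists (M0 + 1)%nat. intros n Hn. apply div_le_iff. lia.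
    specialize (HM0 n ltac:(lia)). pose proof (pos_INR n).
    change (cnt (cyl Ty z r) 0 n) with (F n). nra.
Qed.

Lemma TL_low : Rbar_lt (Finite 0) (dens_low (cyl y z r)) <-> Rbar_lt (Finite 0) (dens_low (cyl Ty z r)).
Proof.
  split.
  - intro H. unfold dens_low in H. apply LimInf_pos_ev in H. destruct H as [d [Hd [N HN]]].
    assert (Hd1 : d < 1).
    { specialize (HN (N + 1)%nat ltac:(lia)). pose proof (cnt_div_01 (cyl y z r) 0 (N + 1)). lra. }
    destruct (lower_all d ltac:(lra)) as [M0 HM0].
    { exists (N + 1)%nat. intros n Hn. specialize (HN n ltac:(lia)).
      apply (proj1 (le_div_iff (cnt (cyl y z r) 0 n) d n ltac:(lia))). lra. }
    apply (LimInf_pos_of _ (d / 24)). lra.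
    exists (M0 + 1)%nat. intros n Hn. apply (proj2 (le_div_iff (cnt (cyl Ty z r) 0 n) (d / 24) n ltac:(lia))).
    apply HM0. lia.
  - intros H. destruct (classic (Rbar_lt (Finite 0) (dens_low (cyl y z r)))) as [H'|H']; auto.
    exfalso. revert H. apply LimInf_notpos. intros d' Hd' M.
    pose proof (LimInf_notpos_inv _ H') as Hy.
    set (d := Rmin (d' / 4) 1).
    assert (Hd : 0 < d <= 1) by (unfold d; unfold Rmin; destruct (Rle_dec (d'/4) 1); lra).
    assert (Hdd : 4 * d <= d') by (unfold d; unfold Rmin; destruct (Rle_dec (d'/4) 1); lra).
    clearbody d.
    destruct (Ho' 1 ltac:(lra)) as [Nc Hc].
    destruct (nat_for ((INR r + 1) / d) 0) as [n2 [_ Hn2]].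
    destruct (Hy d ltac:(lra) (M + Nc + n2 + 2)%nat) as [N [HN HfN]].
    destruct N as [|m]. lia.
    assert (Hs2 : INR n2 <= INR (S m)) by (apply le_INR; lia).
    assert (Hrs : INR r + 1 <= d * INR (S m)).
    { apply (Rmult_le_compat_l d) in Hn2; [|lra]. unfold Rdiv in Hn2.
      rewrite <- Rmult_assoc, (Rmult_comm d (INR r + 1)), Rmult_assoc, Rinv_r, Rmult_1_r in Hn2 by lra.
      assert (d * INR n2 <= d * INR (S m)) by (apply Rmult_le_compat_l; lra). lra. }
    assert (Hrn : (r <= S m)%nat).
    { apply INR_le. assert (d * INR (S m) <= INR (S m)) by (pose proof (pos_INR (S m)); nra). lra. }
    exists (Qm m). split. { unfold P6.Qm. pose proof (al_ge C A1 y HA1 m). lia. }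
    assert (HQ1 : (1 <= Qm m)%nat) by (unfold P6.Qm; pose proof (al_ge C A1 y HA1 m); lia).
    apply div_le_iff; auto.
    pose proof (tile C A1 y Ty HA1 Hpre z r m (al m ^ 2) (le_n _) Hrn) as [_ H2].
    rewrite <- (Qm_eq C A1 y HA1) in H2. rewrite INR_sq in H2.
    pose proof (FP0 C A1 y Ty z r m) as [_ H3]. pose proof (F_le Ty z r (al m)).
    assert (Hcl : INR (cl m) <= INR (al m)).
    { rewrite <- (Rmult_1_l (INR (al m))). apply Hc. lia. }
    change (cnt (cyl y z r) 0 (S m) / INR (S m)) with (f (S m) / INR (S m)) in HfN.
    assert (Hf : f (S m) <= d * INR (S m)) by (apply div_le_iff; [lia|lra]).
    rewrite INR_Qm. pose proof (a_ge m) as Hsa. pose proof (a_ge1 m) as Ha1.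
    set (a := INR (al m)) in *. set (s := INR (S m)) in *. set (c := INR (cl m)) in *.
    assert (1 <= s) by (unfold s; apply (Rle_trans _ (INR 1)); [simpl; lra | apply le_INR; lia]).
    assert (Hx : a * a * (f (S m) + INR r) <= a * a * (2 * d * s)) by (apply Rmult_le_compat_l; nra).
    assert (Hds : 1 <= d * s) by (pose proof (pos_INR r); lra).
    assert (Haa : a <= a * a) by nra.
    assert (H2a : 2 * a <= 2 * d * (s * (a * a))).
    { assert (1 * (a * a) <= (d * s) * (a * a)) by (apply Rmult_le_compat_r; nra). nra. }
    assert (0 <= c) by (unfold c; apply pos_INR).
    assert (d' * (a + c + s * (a * a)) >= d' * (s * (a * a))) by (apply Rle_ge, Rmult_le_compat_l; nra).
    change (F (Qm m)) with (cnt (cyl Ty z r) 0 (Qm m)) in *.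
    assert (4 * d * (a + c + s * (a * a)) <= d' * (a + c + s * (a * a))) by (apply Rmult_le_compat_r; nra).
    nra.
Qed.

End Trans.

End P7.
Import P7.

Module P8.
Open Scope R_scope.

Ltac md t d := pose proof (Nat.div_mod_eq t d); pose proof (Nat.mod_upper_bound t d ltac:(lia)).

Definition p01 : point := fun t => (t mod 2)%nat.
Definition p0011 : point := fun t => ((t mod 4) / 2)%nat.

Lemma p01_Pi k L : (2 <= k)%nat -> (3 <= L)%nat -> Pi k L p01.
Proof.
  intros Hk HL. split.
  - intro n. unfold p01. pose proof (Nat.mod_upper_bound n 2). lia.
  - intros n H. specialize (H 1%nat ltac:(lia)). unfold p01 in H. md (n + 1)%nat 2%nat. md n 2%nat. lia.
Qed.

Lemma p0011_Pi k L : (2 <= k)%nat -> (3 <= L)%nat -> Pi k L p0011.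
Proof.
  intros Hk HL. split.
  - intro n. unfold p0011. md n 4%nat. md (n mod 4)%nat 2%nat. lia.
  - intros n H. pose proof (H 1%nat ltac:(lia)). pose proof (H 2%nat ltac:(lia)).
    unfold p0011 in *. md n 4%nat. md (n+1)%nat 4%nat. md (n+2)%nat 4%nat.
    md (n mod 4)%nat 2%nat. md ((n+1) mod 4)%nat 2%nat. md ((n+2) mod 4)%nat 2%nat. lia.
Qed.

Lemma avoid3 (z : point) : exists p, (p = p01 \/ p = p0011) /\ forall i, ~ agree (shiftn i p) z 3.
Proof.
  destruct (classic ((z 0%nat = 0%nat /\ z 1%nat = 1%nat /\ z 2%nat = 0%nat) \/
                     (z 0%nat = 1%nat /\ z 1%nat = 0%nat /\ z 2%nat = 1%nat))) as [H|H].
  - exists p0011. split; auto. intros i Ha.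
    pose proof (Ha 0%nat ltac:(lia)). pose proof (Ha 1%nat ltac:(lia)). pose proof (Ha 2%nat ltac:(lia)).
    unfold shiftn, p0011 in *. md (i+0)%nat 4%nat. md (i+1)%nat 4%nat. md (i+2)%nat 4%nat.
    md ((i+0) mod 4)%nat 2%nat. md ((i+1) mod 4)%nat 2%nat. md ((i+2) mod 4)%nat 2%nat. lia.
  - exists p01. split; auto. intros i Ha. apply H.
    pose proof (Ha 0%nat ltac:(lia)). pose proof (Ha 1%nat ltac:(lia)). pose proof (Ha 2%nat ltac:(lia)).
    unfold shiftn, p01 in *. md (i+0)%nat 2%nat. md (i+1)%nat 2%nat. md (i+2)%nat 2%nat. lia.
Qed.

Lemma pow2_ge_INR r : INR r < 2 ^ r.
Proof.
  induction r. simpl. lra. rewrite S_INR. simpl.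
  assert (1 <= 2 ^ r) by (apply pow_R1_Rle; lra). lra.
Qed.

Lemma small_pow eps : 0 < eps -> exists r, / 2 ^ r < eps.
Proof.
  intro He. destruct (nat_above (/ eps)) as [r Hr]. exists r.
  pose proof (pow2_ge_INR r). pose proof (pow2_pos r).
  rewrite <- (Rinv_inv eps). apply Rinv_lt_contravar.
  apply Rmult_lt_0_compat; auto. apply Rinv_0_lt_compat; auto. lra.
Qed.

Lemma ball_cyl x z r j : Nset x (Defs.ball z (/ 2 ^ r)) j -> cyl x z r j.
Proof. intros [_ H]. unfold Defs.ball in H. apply dist_agree in H. exact H. Qed.

Lemma cyl_ball x z r j : (1 <= j)%nat -> cyl x z (S r) j -> Nset x (Defs.ball z (/ 2 ^ r)) j.
Proof.
  intros Hj H. split; auto. unfold Defs.ball. apply agree_dist in H.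
  eapply Rle_lt_trans. apply H. rewrite inv_pow2_S. pose proof (pow2_pos r).
  assert (0 < / 2 ^ r) by (apply Rinv_0_lt_compat; auto). lra.
Qed.

Definition monoD (D : (nat -> Prop) -> Rbar) : Prop :=
  forall A B, (forall j, (1 <= j)%nat -> A j -> B j) -> Rbar_le (D A) (D B).

Lemma reduce (D : (nat -> Prop) -> Rbar) (HD : monoD D) x z :
  (forall eps, 0 < eps -> Rbar_lt (Finite 0) (D (Nset x (Defs.ball z eps)))) <->
  (forall r, Rbar_lt (Finite 0) (D (cyl x z r))).
Proof.
  split.
  - intros H r. eapply Rbar_lt_le_trans. apply (H (/ 2 ^ r)).
    apply Rinv_0_lt_compat, pow2_pos. apply HD. intros j _ Hj. apply ball_cyl; auto.
  - intros H eps He. destruct (small_pow eps He) as [r Hr].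
    eapply Rbar_lt_le_trans. apply (H (S r)). apply HD. intros j Hj Hc.
    apply cyl_ball in Hc; auto. destruct Hc as [Hc1 Hc2]. split; auto.
    unfold Defs.ball in *. lra.
Qed.

Lemma monoD_low : monoD dens_low.
Proof. intros A B H. apply dens_low_mono; auto. Qed.
Lemma monoD_up : monoD dens_up.
Proof. intros A B H. apply dens_up_mono; auto. Qed.
Lemma monoD_bu : monoD banach_up.
Proof. intros A B H. apply banach_up_mono1; auto. Qed.

Lemma empty_low (A : nat -> Prop) : (forall j, ~ A j) -> ~ Rbar_lt (Finite 0) (dens_low A).
Proof.
  intro H. apply LimInf_notpos. intros d Hd M. exists M. split; auto.
  rewrite cnt_zero by (intros i _ Hi; apply (H _ Hi)). unfold Rdiv. rewrite Rmult_0_l. lra.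
Qed.

Lemma empty_up (A : nat -> Prop) : (forall j, ~ A j) -> ~ Rbar_lt (Finite 0) (dens_up A).
Proof.
  intro H. apply LimSup_notpos. intros d Hd. exists O. intros n _.
  rewrite cnt_zero by (intros i _ Hi; apply (H _ Hi)). unfold Rdiv. rewrite Rmult_0_l. lra.
Qed.

Lemma nonPi k L z : ~ Pi k L z -> exists r, ~ exists p, Pi k L p /\ agree p z r.
Proof.
  intro H. unfold Pi in H. apply not_and_or in H. destruct H as [H|H].
  - unfold in_Sigma in H. apply not_all_ex_not in H. destruct H as [n Hn].
    exists (S n). intros [p [[Hp1 _] Ha]]. apply Hn. rewrite <- (Ha n) by lia. apply Hp1.
  - apply not_all_ex_not in H. destruct H as [n Hn]. apply NNPP in Hn.
    exists (n + L)%nat. intros [p [[_ Hp2] Ha]]. apply (Hp2 n). intros j Hj.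
    rewrite (Ha (n + j)%nat) by lia. rewrite (Ha n) by lia. apply Hn; auto.
Qed.

Lemma oBl_gen (x z p : point) :
  (forall i, ~ agree (shiftn i p) z 3) ->
  (forall l, exists q, forall t, (t < l + 3)%nat -> x (q + t)%nat = p t) ->
  ~ Rbar_lt (Finite 0) (banach_low (Nset x (Defs.ball z (/ 2 ^ 3)))).
Proof.
  intros Hp Hseg. apply banach_low_zero. intros l Hl. destruct (Hseg l) as [q Hq].
  exists q. apply cnt_zero. intros i Hi Hn. apply ball_cyl in Hn.
  apply (Hp i). intros t Ht. specialize (Hn t Ht). unfold shiftn in *. rewrite <- Hn.
  rewrite <- Nat.add_assoc. symmetry. apply Hq. lia.
Qed.

Lemma prefix_map (p : point) n : is_prefix (map p (seq 0 n)) p.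
Proof.
  intros i Hi. rewrite length_map, length_seq in Hi.
  rewrite nth_indep with (d' := p 0%nat) by (rewrite length_map, length_seq; auto).
  rewrite map_nth, seq_nth by auto. auto.
Qed.

Section Main.
Variables (k L : nat) (C : nat -> list nat) (A1 : list nat) (y Ty : point).
Hypothesis Hk : (2 <= k)%nat.
Hypothesis HL : (3 <= L)%nat.
Hypothesis HC1 : forall n, (1 <= n)%nat -> contained (Pi k L) (C n).
Hypothesis HC2 : forall w, contained (Pi k L) w -> exists n, (1 <= n)%nat /\ C n = w.
Hypothesis HA1k : forall a, In a A1 -> (a < k)%nat.
Hypothesis HA1n : ~ contained (Pi k L) A1.
Hypothesis Htr : Trans k L y.
Hypothesis Ho : forall eps, 0 < eps -> exists N : nat, forall m, (N <= m)%nat ->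
        INR (length (C (S m))) <= eps * INR (length (Aseq A1 C y m)).
Hypothesis Hpre : forall m, is_prefix (Aseq A1 C y m) Ty.

Notation al := (al C A1 y).
Notation cl := (cl C).
Notation gl := (gl C A1 y).

Lemma HA1 : (1 <= length A1)%nat.
Proof.
  destruct A1 as [|a l] eqn:E. 2: simpl; lia.
  exfalso. apply HA1n. exists p01. split. apply p01_Pi; auto. intros i Hi. simpl in Hi. lia.
Qed.

Lemma Hy : Pi k L y.
Proof. exact (proj1 Htr). Qed.

Lemma y_visits p : Pi k L p -> forall R M, exists q, (M <= q)%nat /\ agree (shiftn q y) p R.
Proof.
  intros Hp R M. destruct Htr as [_ Ht]. apply Ht in Hp. destruct Hp as [_ Hp].
  destruct (Hp (/ 2 ^ R) ltac:(apply Rinv_0_lt_compat, pow2_pos) M) as [q [Hq Hd]].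
  exists q. split; auto. apply dist_agree. auto.
Qed.

Lemma Ty_Sigma : in_Sigma k Ty.
Proof.
  assert (Hall : forall m a, In a (Aseq A1 C y m) -> (a < k)%nat).
  { induction m; intros a Ha. simpl in Ha. auto.
    rewrite Aseq_S in Ha. apply in_app_or in Ha. destruct Ha as [Ha|Ha]; auto.
    apply in_app_or in Ha. destruct Ha as [Ha|Ha]; [apply in_app_or in Ha; destruct Ha as [Ha|Ha]|auto].
    - destruct (HC1 (S m) ltac:(lia)) as [p [[Hp _] Hpp]].
      destruct (In_nth _ _ 0%nat Ha) as [i [Hi E]]. rewrite <- E. rewrite <- Hpp by auto. apply Hp.
    - unfold rep in Ha. apply in_concat in Ha. destruct Ha as [w [Hw Ha]].
      apply repeat_spec in Hw. subst w. unfold Yw in Ha. apply in_map_iff in Ha.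
      destruct Ha as [t [E _]]. subst a. destruct Hy as [Hy1 _]. apply Hy1. }
  intro j. rewrite (Ty_A C A1 y Ty Hpre j) by (pose proof (al_ge C A1 y HA1 j); lia).
  apply (Hall j). apply nth_In. pose proof (al_ge C A1 y HA1 j). unfold P4.al in *. lia.
Qed.

Lemma Ty_notPi : ~ Pi k L Ty.
Proof. intro H. apply HA1n. exists Ty. split; auto. apply (Hpre 0%nat). Qed.

Lemma Ty_in_os : omega_sigma (in_Sigma k) Ty Ty.
Proof.
  split. apply Ty_Sigma. intros eps He M. destruct (small_pow eps He) as [r Hr].
  exists (al (M + r) + gl (M + r))%nat. split.
  { pose proof (al_ge C A1 y HA1 (M + r)). lia. }
  eapply Rle_lt_trans. 2: apply Hr.
  eapply Rle_trans. apply (agree_dist _ _ (S r)).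
  - intros i Hi. unfold shiftn. apply (Ty_A2 C A1 y Ty Hpre).
    pose proof (al_ge C A1 y HA1 (M + r)). lia.
  - rewrite inv_pow2_S. pose proof (pow2_pos r).
    assert (0 < / 2 ^ r) by (apply Rinv_0_lt_compat; auto). lra.
Qed.

Lemma Ty_Y0 m t : (t < S m)%nat -> Ty (al m + cl m + t)%nat = y t.
Proof.
  intro Ht. pose proof (Ty_Y C A1 y Ty Hpre m 0 t) as H. rewrite Nat.mul_0_l, Nat.add_0_r in H.
  apply H; auto. pose proof (al_ge C A1 y HA1 m). simpl. nia.
Qed.

Lemma Pi_in_os z : Pi k L z -> omega_sigma (in_Sigma k) Ty z.
Proof.
  intro Hz. split. apply Hz. intros eps He M. destruct (small_pow eps He) as [r Hr].
  destruct (y_visits z Hz (S r) 0) as [q [_ Hq]].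
  set (m := (M + q + r)%nat).
  exists (al m + cl m + q)%nat. split.
  { pose proof (al_ge C A1 y HA1 m). unfold m in *. lia. }
  eapply Rle_lt_trans. 2: apply Hr.
  eapply Rle_trans. apply (agree_dist _ _ (S r)).
  - intros i Hi. unfold shiftn in *. rewrite <- Nat.add_assoc. rewrite Ty_Y0 by (unfold m; lia).
    apply Hq; auto.
  - rewrite inv_pow2_S. pose proof (pow2_pos r).
    assert (0 < / 2 ^ r) by (apply Rinv_0_lt_compat; auto). lra.
Qed.

Lemma oBl_y z : ~ omega_xi (Pi k L) banach_low y z.
Proof.
  intros [_ H]. destruct (avoid3 z) as [p [Hpe Hp]].
  assert (HpPi : Pi k L p) by (destruct Hpe; subst; [apply p01_Pi|apply p0011_Pi]; auto).
  apply (oBl_gen y z p Hp).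
  - intro l. destruct (y_visits p HpPi (l + 3) 0) as [q [_ Hq]]. exists q. intros t Ht. apply Hq. auto.
  - apply H. apply Rinv_0_lt_compat, pow2_pos.
Qed.

Lemma oBl_Ty z : ~ omega_xi (in_Sigma k) banach_low Ty z.
Proof.
  intros [_ H]. destruct (avoid3 z) as [p [Hpe Hp]].
  assert (HpPi : Pi k L p) by (destruct Hpe; subst; [apply p01_Pi|apply p0011_Pi]; auto).
  apply (oBl_gen Ty z p Hp).
  - intro l. destruct (HC2 (map p (seq 0 (l + 3)))) as [n [Hn E]].
    { exists p. split; auto. apply prefix_map. }
    destruct n as [|m]. lia. exists (al m). intros t Ht.
    rewrite (Ty_C C A1 y Ty Hpre m t).
    + rewrite E. rewrite nth_indep with (d' := p 0%nat) by (rewrite length_map, length_seq; auto).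
      rewrite map_nth, seq_nth by auto. auto.
    + unfold P4.cl. rewrite E, length_map, length_seq. auto.
  - apply H. apply Rinv_0_lt_compat, pow2_pos.
Qed.


Lemma cyl_y_empty z r : (~ exists p, Pi k L p /\ agree p z r) -> forall j, ~ cyl y z r j.
Proof. intros H j Hc. apply H. exists (shiftn j y). split; auto. apply Pi_shift. apply Hy. Qed.

Lemma odl_eq z : omega_xi (in_Sigma k) dens_low Ty z <-> omega_xi (Pi k L) dens_low y z.
Proof.
  pose proof (reduce _ monoD_low Ty z) as RT. pose proof (reduce _ monoD_low y z) as RY.
  split.
  - intros [Hs H]. pose proof (proj1 RT H) as H0. clear H. rename H0 into H.
    assert (H' : forall r, Rbar_lt (Finite 0) (dens_low (cyl y z r))).
    { intro r. apply (TL_low C A1 y Ty HA1 Hpre Ho z r). auto. }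
    split.
    + destruct (classic (Pi k L z)) as [Hz|Hz]; auto. exfalso.
      destruct (nonPi k L z Hz) as [r Hr]. apply (empty_low _ (cyl_y_empty z r Hr)). auto.
    + apply (proj2 RY). auto.
  - intros [Hz H]. split. apply Hz. pose proof (proj1 RY H) as H0. clear H. rename H0 into H. apply (proj2 RT). intro r.
    apply (TL_low C A1 y Ty HA1 Hpre Ho z r). auto.
Qed.

Lemma odu_eq z : omega_xi (in_Sigma k) dens_up Ty z <-> omega_xi (Pi k L) dens_up y z.
Proof.
  pose proof (reduce _ monoD_up Ty z) as RT. pose proof (reduce _ monoD_up y z) as RY.
  split.
  - intros [Hs H]. pose proof (proj1 RT H) as H0. clear H. rename H0 into H.
    assert (H' : forall r, Rbar_lt (Finite 0) (dens_up (cyl y z r))).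
    { intro r. apply (TL_up C A1 y Ty HA1 Hpre Ho z r). auto. }
    split.
    + destruct (classic (Pi k L z)) as [Hz|Hz]; auto. exfalso.
      destruct (nonPi k L z Hz) as [r Hr]. apply (empty_up _ (cyl_y_empty z r Hr)). auto.
    + apply (proj2 RY). auto.
  - intros [Hz H]. split. apply Hz. pose proof (proj1 RY H) as H0. clear H. rename H0 into H. apply (proj2 RT). intro r.
    apply (TL_up C A1 y Ty HA1 Hpre Ho z r). auto.
Qed.

Lemma oBu_Ty (HBu : forall z, omega_xi (Pi k L) banach_up y z <-> Pi k L z) z :
  omega_xi (in_Sigma k) banach_up Ty z <-> Pi k L z.
Proof.
  pose proof (reduce _ monoD_bu Ty z) as RT. pose proof (reduce _ monoD_bu y z) as RY.
  split.
  - intros [Hs H]. pose proof (proj1 RT H) as H0. clear H. rename H0 into H.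
    destruct (classic (Pi k L z)) as [Hz|Hz]; auto. exfalso.
    destruct (nonPi k L z Hz) as [r Hr].
    apply (L1_banach k L C A1 y Ty HA1 Hpre Hy HC1 z r Hr). auto.
  - intro Hz. split. apply Hz. apply HBu in Hz. destruct Hz as [_ H]. pose proof (proj1 RY H) as H0. clear H. rename H0 into H.
    apply (proj2 RT). intro r. eapply Rbar_lt_le_trans. apply (H r).
    apply banach_up_mono. intros l m0.
    set (m := (m0 + l + r)%nat). exists (al m + cl m + m0)%nat. right.
    apply (cyl_copy _ _ _ _ _ _ (S m - m0)).
    + intros t Ht. rewrite <- Nat.add_assoc. rewrite Ty_Y0 by lia. auto.
    + unfold m. lia.
Qed.

End Main.

End P8.
Import P8.


Lemma seteq_tr (P Q P' Q' : point -> Prop) :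
  (forall z, P z <-> P' z) -> (forall z, Q z <-> Q' z) -> seteq P' Q' -> seteq P Q.
Proof. intros HP HQ H z. rewrite HP, HQ. apply H. Qed.

Lemma ssub_tr (P Q P' Q' : point -> Prop) :
  (forall z, P z <-> P' z) -> (forall z, Q z <-> Q' z) -> ssub P' Q' -> ssub P Q.
Proof.
  intros HP HQ [H1 H2]. split.
  - intros z Hz. apply HQ, H1, HP, Hz.
  - intro H. apply H2. intro z. rewrite <- HP, <- HQ. apply H.
Qed.

Ltac fin3 H1 H2 H3 HL4 :=
  refine (conj _ (conj _ (conj _ HL4)));
  [ first [ eapply ssub_tr; [ | | exact H1 ] | eapply seteq_tr; [ | | exact H1 ] ]
  | first [ eapply ssub_tr; [ | | exact H2 ] | eapply seteq_tr; [ | | exact H2 ] ]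
  | first [ eapply ssub_tr; [ | | exact H3 ] | eapply seteq_tr; [ | | exact H3 ] ] ].

Theorem lemma5p4 :
  forall (k L : nat), (2 <= k)%nat -> (3 <= L)%nat ->
  forall (C : nat -> list nat) (A1 : list nat),
    (* C_1, C_2, ... enumerates all finite words contained in Pi_L *)
    (forall n, (1 <= n)%nat -> contained (Pi k L) (C n)) ->
    (forall w, contained (Pi k L) w -> exists n, (1 <= n)%nat /\ C n = w) ->
    (forall n m, (1 <= n)%nat -> (1 <= m)%nat -> C n = C m -> n = m) ->
    (* A_1 is a finite word (over {0,...,k-1}) not contained in Pi_L *)
    (forall a, In a A1 -> (a < k)%nat) ->
    ~ contained (Pi k L) A1 ->
  forall y : point, Trans k L y ->
    (* |C_n| = o(|A_n|) *)
    (forall eps, 0 < eps -> exists N : nat, forall m, (N <= m)%nat ->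
        INR (length (C (S m))) <= eps * INR (length (Aseq A1 C y m))) ->
  forall Ty : point, (forall m, is_prefix (Aseq A1 C y m) Ty) ->
  forall i : nat, (1 <= i <= 6)%nat ->
    Case (Pi k L) y i false -> Case (in_Sigma k) Ty i true.
Proof.
  intros k L Hk HL C A1 HC1 HC2 HC3 HA1k HA1n y Htr Ho Ty Hpre i Hi Hcase.
  assert (EBl : forall z, omega_xi (in_Sigma k) banach_low Ty z <-> omega_xi (Pi k L) banach_low y z).
  { intro z. split; intro H; exfalso.
    - eapply oBl_Ty; eauto.
    - eapply oBl_y; eauto. }
  assert (Edl : forall z, omega_xi (in_Sigma k) dens_low Ty z <-> omega_xi (Pi k L) dens_low y z)
    by (intro z; eapply odl_eq; eauto).
  assert (Edu : forall z, omega_xi (in_Sigma k) dens_up Ty z <-> omega_xi (Pi k L) dens_up y z)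
    by (intro z; eapply odu_eq; eauto).
  assert (Gen : seteq (omega_xi (Pi k L) banach_up y) (omega_sigma (Pi k L) y) ->
     (forall z, omega_xi (in_Sigma k) banach_up Ty z <-> omega_xi (Pi k L) banach_up y z) /\
     ssub (omega_xi (in_Sigma k) banach_up Ty) (omega_sigma (in_Sigma k) Ty)).
  { intro Hs.
    assert (HBu : forall z, omega_xi (Pi k L) banach_up y z <-> Pi k L z).
    { intro z. rewrite (Hs z). apply (proj2 Htr). }
    assert (EB : forall z, omega_xi (in_Sigma k) banach_up Ty z <-> Pi k L z)
      by (intro z; eapply oBu_Ty; eauto).
    split.
    - intro z. rewrite EB, HBu. tauto.
    - split.
      + intros z Hz. apply EB in Hz. eapply Pi_in_os; eauto.
      + intro H. eapply Ty_notPi; eauto. apply EB. apply H.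
        eapply Ty_in_os; eauto. }
  destruct i as [|[|[|[|[|[|[|i]]]]]]]; try lia; unfold Case in *; simpl in *;
  destruct Hcase as [H1 [H2 [H3 H4]]]; destruct (Gen H4) as [EBu HL4];
  fin3 H1 H2 H3 HL4; eauto.
Qed.
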